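(* For a continuous homomorphism of Fréchet algebras $\varphi\colon A\to B$ the following are equivalent: (i) $\varphi$ is an epimorphism in the category of Fréchet algebras; (ii) for each Fréchet $B$-bimodule $X$, the map $\widetilde\varphi_X\colon\mathrm{Der}(B,X)\to\mathrm{Der}(A,X)$, $D\mapsto D\circ\varphi$, is injective; (iii) the image of $\check\varphi\colon B\hat\otimes_A\Omega^1A\hat\otimes_AB\to\Omega^1B$ is dense in $\Omega^1B$.
   Context: Conventions: complex unital Fréchet algebras and (bi)modules; $\hat\otimes$ completed projective tensor product; $M\hat\otimes_AN=(M\hat\otimes N)/\overline{\mathrm{span}}\{xa\otimes y-x\otimes ay\}$. $\mathrm{Der}(A,X)$ is the space of continuous derivations $A\to X$ ($X$ regarded as an $A$-bimodule via $\varphi$). $\Omega^1A=\ker(\mu_A\colon A\hat\otimes A\to A)$ with inclusion $j_A$ and universal derivation $d_A(a)=1\otimes a-a\otimes 1$. $\check\varphi$ is the unique $B$-bimodule morphism with $j_B\circ\check\varphi$ equal to the map $B\hat\otimes_A\Omega^1A\hat\otimes_AB\to B\hat\otimes B$ induced by $j_A$; concretely $b\otimes d_A(a)\otimes c\mapsto b\,d_B(\varphi(a))\,c$. *)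

(* Defs.v *)
From HB Require Import structures.
From mathcomp Require Import all_boot all_order all_algebra.
From mathcomp Require Import complex.
From mathcomp Require Import Rstruct.

Set Implicit Arguments.
Unset Strict Implicit.
Unset Printing Implicit Defensive.
Import Order.TTheory GRing.Theory Num.Theory.
Local Open Scope ring_scope.

Notation RR := Rdefinitions.R.
Definition C : fieldType := (Rdefinitions.R)[i].

(* Fréchet spaces are presented (as usual) by a countable family of seminorms.
   [smax p m x] = max_{k <= m} p_k(x); the sets {x | smax p m x < e} form a
   base of 0-neighbourhoods of the induced topology. *)
Definition smax (V : Type) (p : nat -> V -> RR) (m : nat) (x : V) : RR :=
  \big[Num.max/0]_(k < m.+1) p k x.

Definition is_seminorm_family (V : lmodType C) (p : nat -> V -> RR) : Prop :=
  forall n,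
    (forall x, 0 <= p n x) /\
    (forall x y, p n (x + y) <= p n x + p n y) /\
    (forall (a : C) x, p n (a *: x) = ComplexField.Normc.normc a * p n x).

Definition separating (V : lmodType C) (p : nat -> V -> RR) : Prop :=
  forall x, (forall n, p n x = 0) -> x = 0.

Definition cauchy_seq (V : lmodType C) (p : nat -> V -> RR) (u : nat -> V) : Prop :=
  forall n (e : RR), 0 < e -> exists N, forall i j, (N <= i)%N -> (N <= j)%N ->
    p n (u i - u j) < e.

Definition converges_to (V : lmodType C) (p : nat -> V -> RR) (u : nat -> V) (l : V) : Prop :=
  forall n (e : RR), 0 < e -> exists N, forall i, (N <= i)%N -> p n (u i - l) < e.

Definition is_frechet (V : lmodType C) (p : nat -> V -> RR) : Prop :=
  [/\ is_seminorm_family p, separating p &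
      forall u, cauchy_seq p u -> exists l, converges_to p u l].

Definition is_linear (V W : lmodType C) (f : V -> W) : Prop :=
  (forall x y, f (x + y) = f x + f y) /\ (forall (a : C) x, f (a *: x) = a *: f x).

Definition is_bilinear (U V W : lmodType C) (f : U -> V -> W) : Prop :=
  (forall v, is_linear (fun u => f u v)) /\ (forall u, is_linear (f u)).

Definition is_trilinear (U V W Y : lmodType C) (f : U -> V -> W -> Y) : Prop :=
  [/\ forall v w, is_linear (fun u => f u v w),
      forall u w, is_linear (fun v => f u v w) &
      forall u v, is_linear (f u v)].

Definition cont_lin (V W : lmodType C) (p : nat -> V -> RR) (q : nat -> W -> RR)
  (f : V -> W) : Prop :=
  forall n, exists m (c : RR), forall x, q n (f x) <= c * smax p m x.

Definition jcont2 (U V W : lmodType C) (p : nat -> U -> RR) (q : nat -> V -> RR)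
  (r : nat -> W -> RR) (f : U -> V -> W) : Prop :=
  forall n, exists m (c : RR), forall x y, r n (f x y) <= c * smax p m x * smax q m y.

Definition jcont3 (U V W Y : lmodType C) (p : nat -> U -> RR) (q : nat -> V -> RR)
  (r : nat -> W -> RR) (s : nat -> Y -> RR) (f : U -> V -> W -> Y) : Prop :=
  forall n, exists m (c : RR), forall x y z,
    s n (f x y z) <= c * smax p m x * smax q m y * smax r m z.

Definition frechet_alg (A : algType C) (pA : nat -> A -> RR) : Prop :=
  is_frechet pA /\ jcont2 pA pA pA (fun x y : A => x * y).

Definition is_alg_hom (A B : algType C) (f : A -> B) : Prop :=
  [/\ is_linear f, (forall x y, f (x * y) = f x * f y) & f 1 = 1].

Definition frechet_bimod (B : algType C) (pB : nat -> B -> RR)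
  (X : lmodType C) (pX : nat -> X -> RR) (l : B -> X -> X) (r : X -> B -> X) : Prop :=
  [/\ is_frechet pX,
      is_bilinear l /\ jcont2 pB pX pX l,
      is_bilinear r /\ jcont2 pX pB pX r,
      [/\ (forall a b x, l (a * b) x = l a (l b x)), (forall a b x, r x (a * b) = r (r x a) b)
         & (forall a b x, r (l a x) b = l a (r x b))] &
      (forall x, l 1 x = x) /\ (forall x, r x 1 = x)].

(* Continuous derivations S -> X, where X (a B-bimodule) is regarded as an
   S-bimodule via f : S -> B. Der(A,X) is [is_der pA pX phi l r];
   Der(B,X) is [is_der pB pX id l r]. *)
Definition is_der (S B : algType C) (pS : nat -> S -> RR) (X : lmodType C)
  (pX : nat -> X -> RR) (f : S -> B) (l : B -> X -> X) (r : X -> B -> X)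
  (D : S -> X) : Prop :=
  [/\ is_linear D, cont_lin pS pX D &
      forall a b, D (a * b) = l (f a) (D b) + r (D a) (f b)].

Definition frechet_epi (A B : algType C) (pB : nat -> B -> RR) (phi : A -> B) : Prop :=
  forall (D : algType C) (pD : nat -> D -> RR), frechet_alg pD ->
  forall f g : B -> D,
    is_alg_hom f -> cont_lin pB pD f -> is_alg_hom g -> cont_lin pB pD g ->
    (forall a, f (phi a) = g (phi a)) -> forall b, f b = g b.

Definition der_restr_inj (A B : algType C) (pB : nat -> B -> RR) (phi : A -> B) : Prop :=
  forall (X : lmodType C) (pX : nat -> X -> RR) (l : B -> X -> X) (r : X -> B -> X),
    frechet_bimod pB pX l r ->
  forall D1 D2 : B -> X,
    is_der pB pX id l r D1 -> is_der pB pX id l r D2 ->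
    (forall a, D1 (phi a) = D2 (phi a)) -> forall b, D1 b = D2 b.

(* (T, t, tens) is the completed projective tensor product V ^(x) W,
   characterized by its universal property: jointly continuous bilinear maps
   into Fréchet spaces factor uniquely through continuous linear maps. *)
Definition is_proj_tensor (V W T : lmodType C) (p : nat -> V -> RR)
  (q : nat -> W -> RR) (t : nat -> T -> RR) (tens : V -> W -> T) : Prop :=
  [/\ is_frechet t, is_bilinear tens, jcont2 p q t tens &
    forall (Y : lmodType C) (r : nat -> Y -> RR), is_frechet r ->
    forall f : V -> W -> Y, is_bilinear f -> jcont2 p q r f ->
    exists g : T -> Y,
      [/\ is_linear g, cont_lin t r g & forall v w, g (tens v w) = f v w] /\
      (forall g' : T -> Y, is_linear g' -> cont_lin t r g' ->
         (forall v w, g' (tens v w) = f v w) -> forall x, g' x = g x)].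

Definition is_mult_map (A : algType C) (pA : nat -> A -> RR) (T : lmodType C)
  (t : nat -> T -> RR) (tens : A -> A -> T) (mu : T -> A) : Prop :=
  [/\ is_linear mu, cont_lin t pA mu & forall x y, mu (tens x y) = x * y].

Definition tensor_actions (A : algType C) (T : lmodType C) (t : nat -> T -> RR)
  (tens : A -> A -> T) (la : A -> T -> T) (ra : T -> A -> T) : Prop :=
  [/\ forall a, is_linear (la a) /\ cont_lin t t (la a),
      forall a, is_linear (fun w => ra w a) /\ cont_lin t t (fun w => ra w a),
      forall a x y, la a (tens x y) = tens (a * x) y &
      forall a x y, ra (tens x y) a = tens x (y * a)].

(* (O, o, j) is Omega^1 A = ker mu_A with its inclusion j_A into A ^(x) A and
   the relative (subspace) topology. *)
Definition is_omega1 (A : algType C) (T : lmodType C) (t : nat -> T -> RR)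
  (mu : T -> A) (O : lmodType C) (o : nat -> O -> RR) (j : O -> T) : Prop :=
  [/\ is_linear j, injective j, (forall w, mu (j w) = 0),
      (forall x, mu x = 0 -> exists w, j w = x) &
      (forall n w, o n w = t n (j w))].

Definition is_tensor_map (A B : algType C) (TA TB : lmodType C)
  (tA : nat -> TA -> RR) (tB : nat -> TB -> RR) (tensA : A -> A -> TA)
  (tensB : B -> B -> TB) (phi : A -> B) (phiT : TA -> TB) : Prop :=
  [/\ is_linear phiT, cont_lin tA tB phiT &
      forall x y, phiT (tensA x y) = tensB (phi x) (phi y)].

(* A-balanced trilinear maps B x Omega^1 A x B -> Y, where B is an A-bimodule
   via phi and Omega^1 A carries the A-bimodule structure of A ^(x) A. *)
Definition balanced (A B : algType C) (TA O Y : lmodType C) (phi : A -> B)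
  (la : A -> TA -> TA) (ra : TA -> A -> TA) (j : O -> TA) (f : B -> O -> B -> Y) : Prop :=
  (forall a b w w' c, j w' = la a (j w) -> f (b * phi a) w c = f b w' c) /\
  (forall a b w w' c, j w' = ra (j w) a -> f b w' c = f b w (phi a * c)).

(* (Q, q, qt) is B ^(x)_A Omega^1 A ^(x)_A B, characterized by its universal
   property for jointly continuous A-balanced trilinear maps into Fréchet
   spaces (equivalently the quotient of B ^(x) Omega^1 A ^(x) B by the closed
   span of the balancing relations). *)
Definition is_bal_tensor (A B : algType C) (pB : nat -> B -> RR) (TA O : lmodType C)
  (o : nat -> O -> RR) (phi : A -> B) (la : A -> TA -> TA) (ra : TA -> A -> TA)
  (j : O -> TA) (Q : lmodType C) (q : nat -> Q -> RR) (qt : B -> O -> B -> Q) : Prop :=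
  [/\ is_frechet q, is_trilinear qt, jcont3 pB o pB q qt, balanced phi la ra j qt &
    forall (Y : lmodType C) (r : nat -> Y -> RR), is_frechet r ->
    forall f : B -> O -> B -> Y, is_trilinear f -> jcont3 pB o pB r f ->
      balanced phi la ra j f ->
    exists g : Q -> Y,
      [/\ is_linear g, cont_lin q r g & forall b w c, g (qt b w c) = f b w c] /\
      (forall g' : Q -> Y, is_linear g' -> cont_lin q r g' ->
         (forall b w c, g' (qt b w c) = f b w c) -> forall x, g' x = g x)].

(* chk = j_B o phi-check : B ^(x)_A Omega^1 A ^(x)_A B -> B ^(x) B,
   b (x) w (x) c |-> b . (phi ^(x) phi)(j_A w) . c. *)
Definition is_check_map (B : algType C) (TA O TB Q : lmodType C)
  (q : nat -> Q -> RR) (tB : nat -> TB -> RR) (qt : B -> O -> B -> Q)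
  (j : O -> TA) (phiT : TA -> TB) (lb : B -> TB -> TB) (rb : TB -> B -> TB)
  (chk : Q -> TB) : Prop :=
  [/\ is_linear chk, cont_lin q tB chk &
      forall b w c, chk (qt b w c) = lb b (rb (phiT (j w)) c)].

Definition dense_in_omega1 (B : algType C) (TB Q : lmodType C) (tB : nat -> TB -> RR)
  (muB : TB -> B) (chk : Q -> TB) : Prop :=
  forall x, muB x = 0 -> forall m (e : RR), 0 < e -> exists y : Q, smax tB m (x - chk y) < e.

(* Main.v *)
Require Import Defs.
From HB Require Import structures.
From mathcomp Require Import all_boot all_order all_algebra.
From mathcomp Require Import complex.
From mathcomp Require Import Rstruct.
From mathcomp Require Import ring lra.
From mathcomp Require Import classical_sets reals.
From Stdlib Require Import ClassicalEpsilon.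
Set Implicit Arguments. Unset Strict Implicit. Unset Printing Implicit Defensive.
Import Order.TTheory GRing.Theory Num.Theory.
Local Open Scope ring_scope.
Local Open Scope classical_set_scope.
Local Open Scope ring_scope.
Notation nc := (ComplexField.Normc.normc).

Lemma nc_ge0 (a : C) : 0 <= nc a.
Proof. move: a => [x y]. rewrite /ComplexField.Normc.normc /=. exact: sqrtr_ge0. Qed.
Lemma ncM (a b : C) : nc (a * b) = nc a * nc b.
Proof. exact: ComplexField.Normc.normcM. Qed.
Lemma nc0 : nc (0 : C) = 0. Proof. exact: ComplexField.Normc.normc0. Qed.
Lemma nc1 : nc (1 : C) = 1. Proof. exact: ComplexField.Normc.normc1. Qed.
Lemma ncN1 : nc (-1 : C) = 1.
Proof. have := @normcN Rdefinitions.R (1 : C). rewrite nc1. by []. Qed.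
Lemma ncV (a : C) : nc (a^-1) = (nc a)^-1. Proof. exact: ComplexField.Normc.normcV. Qed.
Lemma nc_eq0 (a : C) : nc a = 0 -> a = 0. Proof. exact: ComplexField.Normc.eq0_normc. Qed.

Definition pb (P : Prop) : bool := if excluded_middle_informative P then true else false.
Lemma pbP (P : Prop) : reflect P (pb P).
Proof. rewrite /pb; case: excluded_middle_informative => h; constructor => //. Qed.

Lemma ler_eps (x y : RR) : (forall e : RR, 0 < e -> x <= y + e) -> x <= y.
Proof. by move=> h; apply/ler_addgt0Pr. Qed.

Section Smax.
Variable (V : Type) (p : nat -> V -> RR).

Lemma smax_ge0 m x : 0 <= smax p m x.
Proof.
rewrite /smax; elim/big_rec: _ => // i v _ v0.
by rewrite le_max v0 orbT.
Qed.

Lemma smax_le m x c : 0 <= c -> (forall k, (k <= m)%N -> p k x <= c) -> smax p m x <= c.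
Proof.
move=> c0 h; rewrite /smax; elim/big_rec: _ => // i v _ vc.
by rewrite ge_max vc andbT h // -ltnS.
Qed.

Lemma le_smax_gen (q : nat -> V -> RR) m k x : (k <= m)%N -> q k x <= smax q m x.
Proof.
elim: m k q => [|m ih] k q.
  rewrite leqn0 => /eqP ->; rewrite /smax big_ord_recl big_ord0 le_max lexx //.
rewrite /smax big_ord_recl; case: k => [|k] km; first by rewrite le_max lexx.
rewrite le_max; apply/orP; right.
have := ih k (fun j => q j.+1) km; rewrite /smax => h; apply: le_trans h _.
by rewrite le_eqVlt; apply/orP; left; apply/eqP/eq_bigr => i _; rewrite lift0.
Qed.

Lemma le_smax m k x : (k <= m)%N -> p k x <= smax p m x.
Proof. exact: le_smax_gen. Qed.

Lemma smaxS m x : smax p m.+1 x = Num.max (smax p m x) (p m.+1 x).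
Proof.
apply/eqP; rewrite eq_le; apply/andP; split.
  apply: smax_le; first by rewrite le_max smax_ge0.
  move=> k; rewrite leq_eqVlt => /orP[/eqP ->|]; first by rewrite le_max lexx orbT.
  by rewrite ltnS => km; rewrite le_max le_smax.
rewrite ge_max le_smax // andbT.
apply: smax_le; first exact: smax_ge0.
by move=> k km; apply: le_smax; apply: leqW.
Qed.

Lemma smax_mono m m' x : (m <= m')%N -> smax p m x <= smax p m' x.
Proof.
move=> mm; apply: smax_le; first exact: smax_ge0.
by move=> k km; apply: le_smax; apply: leq_trans mm.
Qed.

Lemma smax_attained m x : (forall k, 0 <= p k x) -> exists2 k, (k <= m)%N & smax p m x = p k x.
Proof.
move=> h; elim: m => [|m [k km e]].
  exists 0%N => //; apply/eqP; rewrite eq_le le_smax // andbT.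
  by apply: smax_le => // k; rewrite leqn0 => /eqP ->.
rewrite smaxS e; case: (leP (p k x) (p m.+1 x)) => hk.
  by exists m.+1.
by exists k => //; apply: leqW.
Qed.
End Smax.

Section Semi.
Variables (V : lmodType C) (p : nat -> V -> RR) (hp : is_seminorm_family p).

Lemma sn_ge0 n x : 0 <= p n x. Proof. by case: (hp n). Qed.
Lemma sn_add n x y : p n (x + y) <= p n x + p n y. Proof. by case: (hp n) => _ []. Qed.
Lemma sn_scale n a x : p n (a *: x) = nc a * p n x. Proof. by case: (hp n) => _ []. Qed.
Lemma sn0 n : p n 0 = 0.
Proof. by rewrite -(scale0r (0 : V)) sn_scale nc0 mul0r. Qed.
Lemma snN n x : p n (- x) = p n x.
Proof. by rewrite -scaleN1r sn_scale ncN1 mul1r. Qed.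
Lemma sn_sub n x y : p n (x - y) <= p n x + p n y.
Proof. by rewrite -(snN n y) sn_add. Qed.
Lemma sn_subC n x y : p n (x - y) = p n (y - x).
Proof. by rewrite -snN opprB. Qed.
Lemma sn_tri n x y z : p n (x - z) <= p n (x - y) + p n (y - z).
Proof. by have := sn_add n (x - y) (y - z); rewrite addrA subrK. Qed.
Lemma sn_diff n x y : p n x <= p n y + p n (x - y).
Proof. have e : y + (x - y) = x by rewrite addrC subrK. by have := sn_add n y (x - y); rewrite e. Qed.

Lemma smax_family : is_seminorm_family (smax p).
Proof.
move=> n; split; first by move=> x; apply: smax_ge0.
split.
  move=> x y; apply: smax_le; first by rewrite addr_ge0 // smax_ge0.
  move=> k kn; apply: le_trans (sn_add k x y) _.
  by rewrite lerD // le_smax.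
move=> a x.
have [k kn eA] := smax_attained n (fun k => sn_ge0 k (a *: x)).
have [k' kn' eX] := smax_attained n (fun k => sn_ge0 k x).
apply/eqP; rewrite eq_le; apply/andP; split.
  by rewrite eA sn_scale ler_wpM2l ?nc_ge0 // le_smax.
by rewrite eX -sn_scale le_smax.
Qed.
End Semi.

Lemma mono2 (c c' s s' : RR) : c <= c' -> 0 <= c' -> 0 <= s -> s <= s' -> c * s <= c' * s'.
Proof. move=> *; nra. Qed.
Lemma mono3 (c c' s s' u u' : RR) : c <= c' -> 0 <= c' -> 0 <= s -> s <= s' -> 0 <= u -> u <= u' ->
  c * s * u <= c' * s' * u'.
Proof. move=> *. have : 0 <= s * u by nra. have : s * u <= s' * u' by nra. nra. Qed.
Lemma mono4 (c c' s s' u u' v v' : RR) : c <= c' -> 0 <= c' -> 0 <= s -> s <= s' -> 0 <= u -> u <= u' ->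
  0 <= v -> v <= v' -> c * s * u * v <= c' * s' * u' * v'.
Proof.
move=> *. have h1 : 0 <= s * u by nra. have h2 : s * u <= s' * u' by nra.
have : 0 <= s * u * v by nra. have : s * u * v <= s' * u' * v' by nra. nra.
Qed.

Section Lin.
Variables (V W : lmodType C) (f : V -> W) (hf : is_linear f).
Lemma lin_add x y : f (x + y) = f x + f y. Proof. by case: hf. Qed.
Lemma lin_scale a x : f (a *: x) = a *: f x. Proof. by case: hf. Qed.
Lemma lin0 : f 0 = 0. Proof. by rewrite -(scale0r (0 : V)) lin_scale scale0r. Qed.
Lemma linN x : f (- x) = - f x. Proof. by rewrite -scaleN1r lin_scale scaleN1r. Qed.
Lemma linB x y : f (x - y) = f x - f y. Proof. by rewrite lin_add linN. Qed.
End Lin.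

Lemma lin_comp (U V W : lmodType C) (f : U -> V) (g : V -> W) :
  is_linear f -> is_linear g -> is_linear (fun x => g (f x)).
Proof. move=> hf hg; split => [x y|a x]; by rewrite ?lin_add ?lin_scale. Qed.
Lemma lin_id (U : lmodType C) : is_linear (fun x : U => x). Proof. by []. Qed.

Lemma merge (P : nat -> nat -> RR -> Prop) :
  (forall k m m' c c', (m <= m')%N -> c <= c' -> 0 <= c' -> P k m c -> P k m' c') ->
  (forall k, exists m c, P k m c) ->
  forall n, exists m c, 0 <= c /\ forall k, (k <= n)%N -> P k m c.
Proof.
move=> mono h; elim=> [|n [m [c [c0 ih]]]].
  have [m [c hc]] := h 0%N; exists m, (Num.max c 0); split; first by rewrite le_max lexx orbT.
  move=> k; rewrite leqn0 => /eqP ->; apply: (mono _ m m c) => //.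
    by rewrite le_max lexx.
  by rewrite le_max lexx orbT.
have [m' [c' hc']] := h n.+1.
have hM : 0 <= Num.max c (Num.max c' 0) by rewrite !le_max lexx !orbT.
exists (maxn m m'), (Num.max c (Num.max c' 0)); split => //.
move=> k; rewrite leq_eqVlt => /orP[/eqP ->|].
  apply: (mono _ m' _ c') => //; first by apply: leq_maxr.
  by rewrite !le_max lexx !orbT.
rewrite ltnS => kn; apply: (mono k m _ c _ _ _ _ (ih k kn)) => //; first by apply: leq_maxl.
by rewrite !le_max lexx.
Qed.

Section Cont.
Variables (U V W Y : Type) (p : nat -> U -> RR) (q : nat -> V -> RR) (r : nat -> W -> RR) (s : nat -> Y -> RR).

Definition bnd1 (f : U -> V) := forall n, exists m c, 0 <= c /\ forall x, smax q n (f x) <= c * smax p m x.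
Definition bnd2 (f : U -> V -> W) :=
  forall n, exists m c, 0 <= c /\ forall x y, smax r n (f x y) <= c * smax p m x * smax q m y.
Definition bnd3 (f : U -> V -> W -> Y) :=
  forall n, exists m c, 0 <= c /\ forall x y z, smax s n (f x y z) <= c * smax p m x * smax q m y * smax r m z.
Definition c1 (f : U -> V) := forall n, exists m c, forall x, q n (f x) <= c * smax p m x.
Definition c2 (f : U -> V -> W) := forall n, exists m c, forall x y, r n (f x y) <= c * smax p m x * smax q m y.
Definition c3 (f : U -> V -> W -> Y) :=
  forall n, exists m c, forall x y z, s n (f x y z) <= c * smax p m x * smax q m y * smax r m z.

Lemma c1_bnd f : c1 f -> bnd1 f.
Proof.
move=> h n.
have [m [c [c0 hk]]] := @merge (fun k m c => forall x, q k (f x) <= c * smax p m x)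
  (fun k m m' c c' mm cc c'0 H x => le_trans (H x) (mono2 cc c'0 (smax_ge0 _ _ _) (smax_mono _ _ mm))) h n.
exists m, c; split => // x; apply: smax_le; first by rewrite mulr_ge0 // smax_ge0.
by move=> k kn; apply: hk.
Qed.
Lemma bnd_c1 f : bnd1 f -> c1 f.
Proof. move=> h n; have [m [c [_ H]]] := h n; exists m, c => x; exact: le_trans (le_smax _ _ (leqnn n)) (H x). Qed.

Lemma c2_bnd f : c2 f -> bnd2 f.
Proof.
move=> h n.
have [m [c [c0 hk]]] := @merge (fun k m c => forall x y, r k (f x y) <= c * smax p m x * smax q m y)
  (fun k m m' c c' mm cc c'0 H x y => le_trans (H x y) (mono3 cc c'0 (smax_ge0 _ _ _) (smax_mono _ _ mm) (smax_ge0 _ _ _) (smax_mono _ _ mm))) h n.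
exists m, c; split => // x y; apply: smax_le; first by rewrite !mulr_ge0 // smax_ge0.
by move=> k kn; apply: hk.
Qed.
Lemma bnd_c2 f : bnd2 f -> c2 f.
Proof. move=> h n; have [m [c [_ H]]] := h n; exists m, c => x y; exact: le_trans (le_smax _ _ (leqnn n)) (H x y). Qed.

Lemma c3_bnd f : c3 f -> bnd3 f.
Proof.
move=> h n.
have [m [c [c0 hk]]] := @merge (fun k m c => forall x y z, s k (f x y z) <= c * smax p m x * smax q m y * smax r m z)
  (fun k m m' c c' mm cc c'0 H x y z => le_trans (H x y z) (mono4 cc c'0 (smax_ge0 _ _ _) (smax_mono _ _ mm) (smax_ge0 _ _ _) (smax_mono _ _ mm) (smax_ge0 _ _ _) (smax_mono _ _ mm))) h n.
exists m, c; split => // x y z; apply: smax_le; first by rewrite !mulr_ge0 // smax_ge0.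
by move=> k kn; apply: hk.
Qed.
End Cont.

Lemma le0_eps (a c : RR) : 0 <= c -> (forall e, 0 < e -> a <= c * e) -> a <= 0.
Proof.
move=> c0 h; apply: ler_eps => e e0; rewrite add0r.
have c1p : 0 < c + 1 by rewrite ltr_wpDl.
have := h (e / (c + 1)) (divr_gt0 e0 c1p).
move=> H; apply: le_trans H _.
have k0 : 0 < e / (c + 1) by rewrite divr_gt0.
have hk : e / (c + 1) * (c + 1) = e by rewrite divfK // gt_eqF.
rewrite -[X in _ <= X]hk mulrDr mulr1 mulrC lerDl; exact: ltW.
Qed.


Section Comp.
Variables (U V W Y U' V' W' : Type) (p : nat -> U -> RR) (q : nat -> V -> RR) (r : nat -> W -> RR)
  (s : nat -> Y -> RR) (p' : nat -> U' -> RR) (q' : nat -> V' -> RR) (r' : nat -> W' -> RR).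

Lemma comp11 (f : U -> V) (g : V -> W) : c1 p q f -> c1 q r g -> c1 p r (fun x => g (f x)).
Proof.
move=> /c1_bnd hf /c1_bnd hg; apply: bnd_c1 => n.
have [m [c [c0 H]]] := hg n; have [m' [c' [c'0 H']]] := hf m.
exists m', (c * c'); split; first by rewrite mulr_ge0.
move=> x; apply: le_trans (H (f x)) _; rewrite -mulrA; exact: ler_wpM2l.
Qed.

Lemma comp21 (f : U -> V -> W) (g : W -> Y) : c2 p q r f -> c1 r s g -> c2 p q s (fun x y => g (f x y)).
Proof.
move=> /c2_bnd hf /c1_bnd hg; apply: bnd_c2 => n.
have [m [c [c0 H]]] := hg n; have [m' [c' [c'0 H']]] := hf m.
exists m', (c * c'); split; first by rewrite mulr_ge0.
move=> x y; apply: le_trans (H (f x y)) _; rewrite -!mulrA; apply: ler_wpM2l => //.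
by rewrite !mulrA.
Qed.

Lemma comp31 (f : U -> V -> W -> Y) (Z : Type) (t : nat -> Z -> RR) (g : Y -> Z) :
  c3 p q r s f -> c1 s t g -> c3 p q r t (fun x y z => g (f x y z)).
Proof.
move=> /c3_bnd hf /c1_bnd hg.
move=> n; have [m [c [c0 H]]] := hg n; have [m' [c' [c'0 H']]] := hf m.
exists m', (c * c') => x y z.
apply: le_trans (le_smax t (g (f x y z)) (leqnn n)) _; apply: le_trans (H (f x y z)) _.
rewrite -!mulrA; apply: ler_wpM2l => //; by rewrite !mulrA.
Qed.

Lemma comp12 (f : U -> V -> W) (h1 : U' -> U) (h2 : V' -> V) :
  c2 p q r f -> c1 p' p h1 -> c1 q' q h2 -> c2 p' q' r (fun x y => f (h1 x) (h2 y)).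
Proof.
move=> /c2_bnd hf /c1_bnd g1 /c1_bnd g2 n.
have [m [c [c0 H]]] := hf n; have [m1 [c1' [c10 H1]]] := g1 m; have [m2 [c2' [c20 H2]]] := g2 m.
exists (maxn m1 m2), (c * c1' * c2') => x y.
apply: le_trans (le_smax r (f (h1 x) (h2 y)) (leqnn n)) _; apply: le_trans (H _ _) _.
have e : c * c1' * c2' * smax p' (maxn m1 m2) x * smax q' (maxn m1 m2) y =
  c * (c1' * smax p' (maxn m1 m2) x) * (c2' * smax q' (maxn m1 m2) y) by ring.
rewrite e; apply: mono3 => //; try exact: smax_ge0.
  apply: le_trans (H1 x) _; apply: ler_wpM2l => //; apply: smax_mono; exact: leq_maxl.
apply: le_trans (H2 y) _; apply: ler_wpM2l => //; apply: smax_mono; exact: leq_maxr.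
Qed.

Lemma comp13 (f : U -> V -> W -> Y) (h1 : U' -> U) (h2 : V' -> V) (h3 : W' -> W) :
  c3 p q r s f -> c1 p' p h1 -> c1 q' q h2 -> c1 r' r h3 -> c3 p' q' r' s (fun x y z => f (h1 x) (h2 y) (h3 z)).
Proof.
move=> /c3_bnd hf /c1_bnd g1 /c1_bnd g2 /c1_bnd g3 n.
have [m [c [c0 H]]] := hf n; have [m1 [c1' [c10 H1]]] := g1 m; have [m2 [c2' [c20 H2]]] := g2 m.
have [m3 [c3' [c30 H3]]] := g3 m.
set M := maxn m1 (maxn m2 m3).
exists M, (c * c1' * c2' * c3') => x y z.
apply: le_trans (le_smax s (f (h1 x) (h2 y) (h3 z)) (leqnn n)) _; apply: le_trans (H _ _ _) _.
have e : c * c1' * c2' * c3' * smax p' M x * smax q' M y * smax r' M z =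
  c * (c1' * smax p' M x) * (c2' * smax q' M y) * (c3' * smax r' M z) by ring.
rewrite e; apply: mono4 => //; try exact: smax_ge0.
- apply: le_trans (H1 x) _; apply: ler_wpM2l => //; apply: smax_mono; exact: leq_maxl.
- apply: le_trans (H2 y) _; apply: ler_wpM2l => //; apply: smax_mono.
  by rewrite /M (leq_trans (leq_maxl m2 m3)) // leq_maxr.
- apply: le_trans (H3 z) _; apply: ler_wpM2l => //; apply: smax_mono.
  by rewrite /M (leq_trans (leq_maxr m2 m3)) // leq_maxr.
Qed.

Lemma c2_left (f : U -> V -> W) y : c2 p q r f -> c1 p r (fun x => f x y).
Proof.
move=> hf n; have [m [c H]] := hf n; exists m, (c * smax q m y) => x.
by apply: le_trans (H x y) _; rewrite -mulrA [smax p m x * _]mulrC mulrA.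
Qed.
Lemma c2_right (f : U -> V -> W) x : c2 p q r f -> c1 q r (f x).
Proof.
move=> hf n; have [m [c H]] := hf n; exists m, (c * smax p m x) => y.
exact: H x y.
Qed.
End Comp.

Lemma c1_id (U : Type) (p : nat -> U -> RR) : c1 p p (fun x => x).
Proof. by move=> n; exists n, 1 => x; rewrite mul1r le_smax. Qed.

Section Sum.
Variables (U : Type) (V : lmodType C) (p : nat -> U -> RR) (q : nat -> V -> RR) (hq : is_seminorm_family q).
Lemma c1_add (f g : U -> V) : c1 p q f -> c1 p q g -> c1 p q (fun x => f x + g x).
Proof.
move=> /c1_bnd hf /c1_bnd hg n; have [m [c [c0 H]]] := hf n; have [m' [c' [c'0 H']]] := hg n.
exists (maxn m m'), (c + c') => x.
apply: le_trans (sn_add hq _ _ _) _; rewrite mulrDl lerD //.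
  apply: le_trans (le_smax q (f x) (leqnn n)) _; apply: le_trans (H x) _.
  by apply: ler_wpM2l => //; apply: smax_mono; exact: leq_maxl.
apply: le_trans (le_smax q (g x) (leqnn n)) _; apply: le_trans (H' x) _.
by apply: ler_wpM2l => //; apply: smax_mono; exact: leq_maxr.
Qed.
Lemma c1_opp (f : U -> V) : c1 p q f -> c1 p q (fun x => - f x).
Proof. move=> hf n; have [m [c H]] := hf n; exists m, c => x; by rewrite snN. Qed.
Lemma c1_sub (f g : U -> V) : c1 p q f -> c1 p q g -> c1 p q (fun x => f x - g x).
Proof. by move=> hf hg; apply: c1_add => //; apply: c1_opp. Qed.
Lemma c1_zero : c1 p q (fun _ => 0).
Proof. by move=> n; exists 0%N, 0 => x; rewrite sn0 // mul0r. Qed.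
End Sum.

Lemma frechet_sn (V : lmodType C) (p : nat -> V -> RR) : is_frechet p -> is_seminorm_family p.
Proof. by case. Qed.

Lemma bilin_comp (U V W Y : lmodType C) (f : U -> V -> W) (g : W -> Y) :
  is_bilinear f -> is_linear g -> is_bilinear (fun x y => g (f x y)).
Proof. move=> [h1 h2] hg; split => [v|u]; exact: lin_comp. Qed.

Lemma trilin_comp (U V W Y Z : lmodType C) (f : U -> V -> W -> Y) (g : Y -> Z) :
  is_trilinear f -> is_linear g -> is_trilinear (fun x y z => g (f x y z)).
Proof. move=> [h1 h2 h3] hg; split => *; exact: lin_comp. Qed.

Lemma tens_uniq (V W T : lmodType C) p q t (tens : V -> W -> T) (h : is_proj_tensor p q t tens)
  (Y : lmodType C) (r : nat -> Y -> RR) (hY : is_frechet r) (g1 g2 : T -> Y) :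
  is_linear g1 -> cont_lin t r g1 -> is_linear g2 -> cont_lin t r g2 ->
  (forall v w, g1 (tens v w) = g2 (tens v w)) -> forall x, g1 x = g2 x.
Proof.
case: h => _ hb hc U l1 k1 l2 k2 e.
have [g [_ H]] := U Y r hY (fun v w => g1 (tens v w)) (bilin_comp hb l1) (comp21 hc k1).
by move=> x; rewrite (H g1 l1 k1) // (H g2 l2 k2).
Qed.

Lemma bal_uniq (A B : algType C) (pB : nat -> B -> RR) (TA O : lmodType C) (o : nat -> O -> RR)
  (phi : A -> B) la ra (j : O -> TA) (Q : lmodType C) (q : nat -> Q -> RR) qt
  (h : is_bal_tensor pB o phi la ra j q qt)
  (Y : lmodType C) (r : nat -> Y -> RR) (hY : is_frechet r) (g1 g2 : Q -> Y) :
  is_linear g1 -> cont_lin q r g1 -> is_linear g2 -> cont_lin q r g2 ->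
  (forall b w c, g1 (qt b w c) = g2 (qt b w c)) -> forall x, g1 x = g2 x.
Proof.
case: h => _ ht hc [hb1 hb2] U l1 k1 l2 k2 e.
have bal : balanced phi la ra j (fun b w c => g1 (qt b w c)).
  by split=> a b w w' c hw; [rewrite (hb1 a b w w' c hw) | rewrite (hb2 a b w w' c hw)].
have [g [_ H]] := U Y r hY (fun b w c => g1 (qt b w c)) (trilin_comp ht l1) (comp31 hc k1) bal.
by move=> x; rewrite (H g1 l1 k1) // (H g2 l2 k2).
Qed.

Lemma ii_to_i (A B : algType C) (pB : nat -> B -> RR) (phi : A -> B) :
  der_restr_inj pB phi -> frechet_epi pB phi.
Proof.
move=> H D pD [hD mD] f g [lf mf f1] cf [lg mg g1] cg e b.
have snD := frechet_sn hD.
pose l := fun (b : B) (x : D) => f b * x.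
pose r := fun (x : D) (b : B) => x * g b.
have bm : frechet_bimod pB pD l r.
  split => //.
  - split; first split.
    + move=> v; split => [x y|a x]; rewrite /l.
        by rewrite (lin_add lf) mulrDl.
      by rewrite (lin_scale lf) -scalerAl.
    + move=> u; split => [x y|a x]; rewrite /l.
        by rewrite mulrDr.
      by rewrite scalerAr.
    + exact: (comp12 mD cf (c1_id pD)).
  - split; first split.
    + move=> v; split => [x y|a x]; rewrite /r.
        by rewrite mulrDl.
      by rewrite -scalerAl.
    + move=> u; split => [x y|a x]; rewrite /r.
        by rewrite (lin_add lg) mulrDr.
      by rewrite (lin_scale lg) scalerAr.
    + exact: (comp12 mD (c1_id pD) cg).
  - split => a b' x; rewrite /l /r ?mf ?mg; by rewrite !mulrA.
  - by split => x; rewrite /l /r ?f1 ?g1 ?mul1r ?mulr1.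
pose D1 := fun b => f b - g b.
have hD1 : is_der pB pD id l r D1.
  split.
  - split => [x y|a x]; rewrite /D1.
      by rewrite (lin_add lf) (lin_add lg) opprD addrACA.
    by rewrite (lin_scale lf) (lin_scale lg) scalerBr.
  - rewrite /D1; exact: (c1_sub snD cf cg).
  - move=> a b'; rewrite /D1 /l /r /= mf mg mulrBr mulrBl addrA subrK //.
have hD2 : is_der pB pD id l r (fun _ => 0).
  split.
  - by split => [x y|a x]; rewrite ?addr0 ?scaler0.
  - exact: c1_zero.
  - by move=> a b'; rewrite /l /r mulr0 mul0r addr0.
have h1 : forall a, D1 (phi a) = 0 by move=> a; rewrite /D1 e subrr.
have := H D pD l r bm D1 (fun _ => 0) hD1 hD2 h1 b.
by rewrite /D1 => /eqP; rewrite subr_eq0 => /eqP.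
Qed.

Definition bimod_ax (B : algType C) (X : lmodType C) (l : B -> X -> X) (r : X -> B -> X) : Prop :=
  [/\ is_bilinear l, is_bilinear r,
      [/\ (forall a b x, l (a * b) x = l a (l b x)), (forall a b x, r x (a * b) = r (r x a) b)
         & (forall a b x, r (l a x) b = l a (r x b))] &
      (forall x, l 1 x = x) /\ (forall x, r x 1 = x)].

Lemma bimod_of (B : algType C) pB (X : lmodType C) pX (l : B -> X -> X) r :
  frechet_bimod pB pX l r -> bimod_ax l r.
Proof. by case=> _ [h1 _] [h2 _] h3 h4. Qed.

Section Sqz.
Variables (B : algType C) (X : lmodType C) (l : B -> X -> X) (r : X -> B -> X).
Definition sqz (h : bimod_ax l r) := (B * X)%type.
Variable h : bimod_ax l r.
HB.instance Definition _ := GRing.Lmodule.on (sqz h).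
Definition sqz_one : sqz h := (1, 0).
Definition sqz_mul (u v : sqz h) : sqz h := (u.1 * v.1, l u.1 v.2 + r u.2 v.1).

Let lb1 v : is_linear (fun u => l u v). Proof. by case: h => [[]]. Qed.
Let lb2 u : is_linear (l u). Proof. by case: h => [[]]. Qed.
Let rb1 v : is_linear (fun u => r u v). Proof. by case: h => _ []. Qed.
Let rb2 u : is_linear (r u). Proof. by case: h => _ []. Qed.
Let lA a b x : l (a * b) x = l a (l b x). Proof. by case: h => _ _ []. Qed.
Let rA a b x : r x (a * b) = r (r x a) b. Proof. by case: h => _ _ []. Qed.
Let lrA a b x : r (l a x) b = l a (r x b). Proof. by case: h => _ _ []. Qed.
Let l1 x : l 1 x = x. Proof. by case: h => _ _ _ []. Qed.
Let r1 x : r x 1 = x. Proof. by case: h => _ _ _ []. Qed.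

Lemma sqz_mulA : associative sqz_mul.
Proof.
move=> [a x] [b y] [c z]; rewrite /sqz_mul /=; congr (_, _); first by rewrite mulrA.
rewrite (lin_add (lb2 a)) (lin_add (rb1 c)) lA rA lrA.
by rewrite addrA.
Qed.
Lemma sqz_mul1r : left_id sqz_one sqz_mul.
Proof. by move=> [a x]; rewrite /sqz_mul /= mul1r l1 (lin0 (rb1 a)) addr0. Qed.
Lemma sqz_mulr1 : right_id sqz_one sqz_mul.
Proof. by move=> [a x]; rewrite /sqz_mul /= mulr1 r1 (lin0 (lb2 a)) add0r. Qed.
Lemma sqz_mulDl : left_distributive sqz_mul +%R.
Proof.
move=> [a x] [b y] [c z]; rewrite /sqz_mul /=; congr (_, _); first by rewrite mulrDl.
by rewrite (lin_add (lb1 z)) (lin_add (rb1 c)) addrACA.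
Qed.
Lemma sqz_mulDr : right_distributive sqz_mul +%R.
Proof.
move=> [a x] [b y] [c z]; rewrite /sqz_mul /=; congr (_, _); first by rewrite mulrDr.
by rewrite (lin_add (lb2 a)) (lin_add (rb2 x)) addrACA.
Qed.
Lemma sqz_one_neq0 : sqz_one != 0.
Proof. by apply/negP => /eqP [] /eqP; rewrite oner_eq0. Qed.
HB.instance Definition _ := GRing.Zmodule_isNzRing.Build (sqz h) sqz_mulA sqz_mul1r sqz_mulr1 sqz_mulDl sqz_mulDr sqz_one_neq0.
Lemma sqz_scalerAl (a : C) (u v : sqz h) : a *: (u * v) = (a *: u) * v.
Proof.
move: u v => [b x] [c y]; rewrite /GRing.mul /= /sqz_mul /=; congr (_, _); first by rewrite scalerAl.
by rewrite scalerDr (lin_scale (lb1 y)) (lin_scale (rb1 c)).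
Qed.
HB.instance Definition _ := GRing.Lmodule_isLalgebra.Build C (sqz h) sqz_scalerAl.
Lemma sqz_scalerAr (a : C) (u v : sqz h) : a *: (u * v) = u * (a *: v).
Proof.
move: u v => [b x] [c y]; rewrite /GRing.mul /= /sqz_mul /=; congr (_, _); first by rewrite scalerAr.
by rewrite scalerDr (lin_scale (lb2 b)) (lin_scale (rb2 x)).
Qed.
HB.instance Definition _ := GRing.Lalgebra_isAlgebra.Build C (sqz h) sqz_scalerAr.

Lemma sqz_mulE (u v : sqz h) : u * v = (u.1 * v.1, l u.1 v.2 + r u.2 v.1).
Proof. by []. Qed.
Lemma sqz_oneE : (1 : sqz h) = (1, 0). Proof. by []. Qed.
End Sqz.

Section SqzNorm.
Variables (B : algType C) (X : lmodType C) (l : B -> X -> X) (r : X -> B -> X) (h : bimod_ax l r).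
Variables (pB : nat -> B -> RR) (pX : nat -> X -> RR).
Hypotheses (snB : is_seminorm_family pB) (snX : is_seminorm_family pX).
Definition sqs (n : nat) (u : sqz h) : RR := pB n u.1 + pX n u.2.

Lemma sqs_family : is_seminorm_family sqs.
Proof.
move=> n; split; first by move=> u; rewrite /sqs addr_ge0 // sn_ge0.
split.
  move=> u v; rewrite /sqs; have := sn_add snB n u.1 v.1; have := sn_add snX n u.2 v.2.
  rewrite /=; lra.
by move=> a u; rewrite /sqs /= !(sn_scale snB, sn_scale snX) mulrDr.
Qed.

Lemma smax_sqs1 m M (u : sqz h) : (m <= M)%N -> smax pB m u.1 <= smax sqs M u.
Proof.
move=> mM; apply: smax_le; first exact: smax_ge0.
move=> k km; apply: le_trans (le_smax sqs u (leq_trans km mM)).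
by rewrite /sqs lerDl sn_ge0.
Qed.
Lemma smax_sqs2 m M (u : sqz h) : (m <= M)%N -> smax pX m u.2 <= smax sqs M u.
Proof.
move=> mM; apply: smax_le; first exact: smax_ge0.
move=> k km; apply: le_trans (le_smax sqs u (leq_trans km mM)).
by rewrite /sqs lerDr sn_ge0.
Qed.

Lemma sqs_frechet : is_frechet pB -> is_frechet pX -> is_frechet sqs.
Proof.
move=> [_ sepB cB] [_ sepX cX]; split.
- exact: sqs_family.
- move=> [b x] H; have hb : forall n, pB n b = 0.
    move=> n; have := H n; rewrite /sqs /= => e; apply/eqP; rewrite eq_le sn_ge0 // andbT.
    by rewrite -e lerDl sn_ge0.
  have hx : forall n, pX n x = 0.
    move=> n; have := H n; rewrite /sqs /= => e; apply/eqP; rewrite eq_le sn_ge0 // andbT.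
    by rewrite -e lerDr sn_ge0.
  by rewrite (sepB b hb) (sepX x hx).
- move=> u hu.
  have [lb hlb] : exists lb, converges_to pB (fun i => (u i).1) lb.
    apply: cB => n e e0; have [N HN] := hu n e e0; exists N => i j iN jN.
    apply: le_lt_trans (HN i j iN jN); by rewrite /sqs lerDl sn_ge0.
  have [lx hlx] : exists lx, converges_to pX (fun i => (u i).2) lx.
    apply: cX => n e e0; have [N HN] := hu n e e0; exists N => i j iN jN.
    apply: le_lt_trans (HN i j iN jN); by rewrite /sqs lerDr sn_ge0.
  exists ((lb, lx) : sqz h) => n e e0.
  have e20 : 0 < e / 2 by rewrite divr_gt0.
  have [N1 H1] := hlb n _ e20; have [N2 H2] := hlx n _ e20.
  exists (maxn N1 N2) => i iN; rewrite /sqs /=.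
  have := H1 i (leq_trans (leq_maxl _ _) iN); have := H2 i (leq_trans (leq_maxr _ _) iN).
  have : e / 2 + e / 2 = e by rewrite -splitr.
  move: (pB n _) (pX n _) => a b' *. lra.
Qed.

Lemma sqs_mul : jcont2 pB pB pB (fun x y : B => x * y) -> jcont2 pB pX pX l -> jcont2 pX pB pX r ->
  jcont2 sqs sqs sqs (fun u v : sqz h => u * v).
Proof.
move=> /c2_bnd hm /c2_bnd hl /c2_bnd hr n.
have [m1 [k1 [k10 H1]]] := hm n; have [m2 [k2 [k20 H2]]] := hl n; have [m3 [k3 [k30 H3]]] := hr n.
set M := maxn m1 (maxn m2 m3).
have m1M : (m1 <= M)%N by rewrite leq_maxl.
have m2M : (m2 <= M)%N by rewrite /M (leq_trans (leq_maxl m2 m3)) // leq_maxr.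
have m3M : (m3 <= M)%N by rewrite /M (leq_trans (leq_maxr m2 m3)) // leq_maxr.
exists M, (k1 + k2 + k3) => u v.
rewrite /sqs sqz_mulE /=.
apply: le_trans (lerD (lexx _) (sn_add snX _ _ _)) _.
have t1 : pB n (u.1 * v.1) <= k1 * smax sqs M u * smax sqs M v.
  apply: le_trans (le_smax pB _ (leqnn n)) _; apply: le_trans (H1 _ _) _.
  apply: mono3 => //; try exact: smax_ge0; exact: smax_sqs1.
have t2 : pX n (l u.1 v.2) <= k2 * smax sqs M u * smax sqs M v.
  apply: le_trans (le_smax pX _ (leqnn n)) _; apply: le_trans (H2 _ _) _.
  apply: mono3 => //; try exact: smax_ge0; [exact: smax_sqs1 | exact: smax_sqs2].
have t3 : pX n (r u.2 v.1) <= k3 * smax sqs M u * smax sqs M v.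
  apply: le_trans (le_smax pX _ (leqnn n)) _; apply: le_trans (H3 _ _) _.
  apply: mono3 => //; try exact: smax_ge0; [exact: smax_sqs2 | exact: smax_sqs1].
have e : (k1 + k2 + k3) * smax sqs M u * smax sqs M v =
  k1 * smax sqs M u * smax sqs M v + (k2 * smax sqs M u * smax sqs M v + k3 * smax sqs M u * smax sqs M v) by ring.
by rewrite e lerD // lerD.
Qed.
End SqzNorm.

Lemma der1 (B : algType C) pB (X : lmodType C) pX (l : B -> X -> X) r D :
  frechet_bimod pB pX l r -> is_der pB pX id l r D -> D 1 = 0.
Proof.
case=> _ _ _ _ [l1 r1] [_ _ DL].
have := DL 1 1; rewrite mulr1 /= l1 r1 => h; apply: (addrI (D 1)); by rewrite addr0 -h.
Qed.

Lemma i_to_ii (A B : algType C) (pB : nat -> B -> RR) (phi : A -> B) :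
  frechet_alg pB -> frechet_epi pB phi -> der_restr_inj pB phi.
Proof.
move=> [fB mB] epi X pX l r bm D1 D2 hD1 hD2 e b.
have h := bimod_of bm.
have snB := frechet_sn fB.
case: (bm) => fX [_ lc] [_ rc] _ _.
have snX := frechet_sn fX.
have hE : frechet_alg (@sqs _ _ _ _ h pB pX) by split; [exact: sqs_frechet | exact: sqs_mul].
have mk : forall D, is_der pB pX id l r D ->
    is_alg_hom (fun b => (b, D b) : sqz h) /\ cont_lin pB (@sqs _ _ _ _ h pB pX) (fun b => (b, D b) : sqz h).
  move=> D hD; have D1z := der1 bm hD; case: hD => Dl Dc DL; split.
    split.
    - split => [x y|a x]; by rewrite ?(lin_add Dl) ?(lin_scale Dl).
    - by move=> x y; rewrite sqz_mulE /= DL.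
    - by rewrite sqz_oneE D1z.
  apply: bnd_c1 => n; have [m [c [c0 H]]] := c1_bnd Dc n.
  exists (maxn n m), (1 + c); split; first by rewrite addr_ge0.
  move=> x; apply: smax_le; first by rewrite mulr_ge0 ?addr_ge0 ?smax_ge0.
  move=> k kn; rewrite /sqs /= mulrDl mul1r lerD //.
    by apply: le_trans (le_smax pB x kn) _; apply: smax_mono; exact: leq_maxl.
  apply: le_trans (le_smax pX (D x) kn) _; apply: le_trans (H x) _.
  by apply: ler_wpM2l => //; apply: smax_mono; exact: leq_maxr.
have [F1h F1c] := mk D1 hD1; have [F2h F2c] := mk D2 hD2.
have := epi _ _ hE _ _ F1h F1c F2h F2c.
have H : forall a, ((phi a, D1 (phi a)) : sqz h) = (phi a, D2 (phi a)) by move=> a; rewrite e.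
by move=> /(_ H b) [].
Qed.

Section Quot.
Variables (T : lmodType C) (s : nat -> T -> RR) (hs : is_seminorm_family s).

Definition NK (x : T) : Prop := forall n, s n x = 0.
Lemma NK0 : NK 0. Proof. by move=> n; rewrite sn0. Qed.
Lemma NKD x y : NK x -> NK y -> NK (x + y).
Proof.
move=> hx hy n; apply/eqP; rewrite eq_le sn_ge0 // andbT.
by have := sn_add hs n x y; rewrite hx hy addr0.
Qed.
Lemma NKZ a x : NK x -> NK (a *: x).
Proof. by move=> hx n; rewrite sn_scale // hx mulr0. Qed.
Lemma NKN x : NK x -> NK (- x).
Proof. by move=> hx n; rewrite snN. Qed.
Lemma NKB x y : NK x -> NK y -> NK (x - y).
Proof. by move=> hx hy; apply: NKD => //; apply: NKN. Qed.

Definition Pc (x : T) : pred T := fun y => pb (NK (x - y)).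
Lemma ex_canon x : exists y, Pc x y.
Proof. by exists x; apply/pbP; rewrite subrr; apply: NK0. Qed.
Definition canon x := xchoose (ex_canon x).
Lemma canonP x : NK (x - canon x).
Proof. by have := xchooseP (ex_canon x); move/pbP. Qed.
Lemma canon_eq x y : NK (x - y) -> canon x = canon y.
Proof.
move=> hxy; apply: eq_xchoose => z; rewrite /Pc.
apply/pbP/pbP => h.
  have -> : y - z = - (x - y) + (x - z) by rewrite opprB addrA subrK.
  by apply: NKD => //; apply: NKN.
have -> : x - z = (x - y) + (y - z) by rewrite addrA subrK.
exact: NKD.
Qed.
Lemma canon_idem x : canon (canon x) = canon x.
Proof. by apply: canon_eq; rewrite -opprB; apply: NKN; apply: canonP. Qed.

Definition qT := {x : T | canon x == x}.
HB.instance Definition _ := Choice.on qT.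
Definition qpi (x : T) : qT := exist _ (canon x) (introT eqP (canon_idem x)).
Lemma val_qpi x : val (qpi x) = canon x. Proof. by []. Qed.
Lemma qpiE x y : NK (x - y) -> qpi x = qpi y.
Proof. by move=> h; apply: val_inj; rewrite /= (canon_eq h). Qed.
Lemma qpiE' x y : qpi x = qpi y -> NK (x - y).
Proof.
move=> /(congr1 val) /= e.
have -> : x - y = (x - canon x) - (y - canon y) by rewrite e opprB addrA subrK.
by apply: NKB; apply: canonP.
Qed.
Lemma qpi_val (u : qT) : qpi (val u) = u.
Proof. by apply: val_inj; rewrite /= (eqP (valP u)). Qed.
Lemma NK_val x : NK (val (qpi x) - x).
Proof. by rewrite /= -opprB; apply: NKN; apply: canonP. Qed.

Definition qzero := qpi 0.
Definition qadd (u v : qT) := qpi (val u + val v).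
Definition qopp (u : qT) := qpi (- val u).
Definition qscale (a : C) (u : qT) := qpi (a *: val u).

Lemma qaddE x y : qadd (qpi x) (qpi y) = qpi (x + y).
Proof.
apply: qpiE; have -> : val (qpi x) + val (qpi y) - (x + y) = (val (qpi x) - x) + (val (qpi y) - y).
  by rewrite opprD addrACA.
by apply: NKD; apply: NK_val.
Qed.
Lemma qoppE x : qopp (qpi x) = qpi (- x).
Proof. by apply: qpiE; rewrite -opprD; apply: NKN; apply: NK_val. Qed.
Lemma qscaleE a x : qscale a (qpi x) = qpi (a *: x).
Proof. by apply: qpiE; rewrite -scalerBr; apply: NKZ; apply: NK_val. Qed.

Lemma qaddA : associative qadd.
Proof. by move=> u v w; rewrite -(qpi_val u) -(qpi_val v) -(qpi_val w) !qaddE addrA. Qed.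
Lemma qaddC : commutative qadd.
Proof. by move=> u v; rewrite -(qpi_val u) -(qpi_val v) !qaddE addrC. Qed.
Lemma qadd0 : left_id qzero qadd.
Proof. by move=> u; rewrite -(qpi_val u) /qzero qaddE add0r. Qed.
Lemma qaddN : left_inverse qzero qopp qadd.
Proof. by move=> u; rewrite -(qpi_val u) qoppE qaddE addNr. Qed.
HB.instance Definition _ := GRing.isZmodule.Build qT qaddA qaddC qadd0 qaddN.
Lemma qpiD x y : qpi (x + y) = qpi x + qpi y. Proof. by rewrite -qaddE. Qed.
Lemma qscaleA a b u : qscale a (qscale b u) = qscale (a * b) u.
Proof. by rewrite -(qpi_val u) !qscaleE scalerA. Qed.
Lemma qscale1 : left_id 1 qscale.
Proof. by move=> u; rewrite -(qpi_val u) qscaleE scale1r. Qed.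
Lemma qscaleDr : right_distributive qscale +%R.
Proof. by move=> a u v; rewrite -(qpi_val u) -(qpi_val v) -qpiD !qscaleE scalerDr qpiD. Qed.
Lemma qscaleDl v : {morph qscale^~ v: a b / a + b}.
Proof. by move=> a b; rewrite -(qpi_val v) !qscaleE scalerDl qpiD. Qed.
HB.instance Definition _ := GRing.Zmodule_isLmodule.Build C qT qscaleA qscale1 qscaleDr qscaleDl.

Lemma qpiZ a x : qpi (a *: x) = a *: qpi x. Proof. by rewrite -qscaleE. Qed.
Lemma qpiN x : qpi (- x) = - qpi x. Proof. by rewrite -qoppE. Qed.
Lemma qpiB x y : qpi (x - y) = qpi x - qpi y. Proof. by rewrite qpiD qpiN. Qed.
Lemma qpi0 : qpi 0 = 0. Proof. by []. Qed.
Lemma qpi_lin : is_linear qpi. Proof. by split => [x y|a x]; rewrite ?qpiD ?qpiZ. Qed.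
Lemma qpi_eq0 x : qpi x = 0 -> NK x.
Proof. by rewrite -qpi0 => /qpiE'; rewrite subr0. Qed.
Lemma qpi_surj (u : qT) : exists x, u = qpi x. Proof. by exists (val u); rewrite qpi_val. Qed.

Definition qs (n : nat) (u : qT) : RR := s n (val u).
Lemma s_NK n x y : NK (x - y) -> s n x = s n y.
Proof.
move=> h; apply/eqP; rewrite eq_le; apply/andP; split.
  by have := sn_diff hs n x y; rewrite h addr0.
by have := sn_diff hs n y x; rewrite (sn_subC hs n y x) h addr0.
Qed.
Lemma qs_qpi n x : qs n (qpi x) = s n x.
Proof. exact: s_NK (NK_val x). Qed.

Lemma qs_sub n u x : qs n (u - qpi x) = s n (val u - x).
Proof. by rewrite -qs_qpi qpiB qpi_val. Qed.

Lemma qs_family : is_seminorm_family qs.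
Proof.
move=> n; split; first by move=> u; apply: (sn_ge0 hs).
split.
  move=> u v; rewrite -(qpi_val u) -(qpi_val v) -qpiD !qs_qpi; exact: (sn_add hs).
by move=> a u; rewrite -(qpi_val u) -qpiZ !qs_qpi (sn_scale hs).
Qed.
Lemma qs_sep : separating qs.
Proof.
move=> u h; rewrite -(qpi_val u) -qpi0; apply: qpiE; rewrite subr0.
by move=> n; have := h n; rewrite /qs.
Qed.
Lemma qs_complete : (forall u, cauchy_seq s u -> exists l, converges_to s u l) ->
  forall u, cauchy_seq qs u -> exists l, converges_to qs u l.
Proof.
move=> cT u hu.
have [l hl] : exists l, converges_to s (fun i => val (u i)) l.
  apply: cT => n e e0; have [N HN] := hu n e e0; exists N => i j iN jN.
  by have := HN i j iN jN; rewrite -{1}(qpi_val (u j)) qs_sub.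
exists (qpi l) => n e e0; have [N HN] := hl n e e0; exists N => i iN.
by rewrite qs_sub; apply: HN.
Qed.
Lemma qs_frechet : (forall u, cauchy_seq s u -> exists l, converges_to s u l) -> is_frechet qs.
Proof. by move=> h; split; [exact: qs_family | exact: qs_sep | exact: qs_complete]. Qed.
Lemma qpi_cont : c1 s qs qpi.
Proof. by move=> n; exists n, 1 => x; rewrite qs_qpi mul1r le_smax. Qed.
End Quot.

Section InfSemi.
Variables (T Q : lmodType C) (t : nat -> T -> RR) (ht : is_seminorm_family t) (chk : Q -> T)
  (hchk : is_linear chk).

Definition iset (n : nat) (x : T) : set RR := [set r | exists y, r = smax t n (x - chk y)].
Definition qn (n : nat) (x : T) : RR := inf (iset n x).

Lemma iset_lb n x : has_lbound (iset n x).
Proof. by exists 0 => r [y ->]; apply: smax_ge0. Qed.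
Lemma iset_ne n x : iset n x !=set0.
Proof. by exists (smax t n (x - chk 0)); exists 0. Qed.

Lemma qn_le n x y : qn n x <= smax t n (x - chk y).
Proof. by apply: (ge_inf (iset_lb n x)); exists y. Qed.
Lemma qn_ge0 n x : 0 <= qn n x.
Proof. by apply: lb_le_inf; [exact: iset_ne | move=> r [y ->]; apply: smax_ge0]. Qed.
Lemma qn_approx n x e : 0 < e -> exists y, smax t n (x - chk y) < qn n x + e.
Proof.
move=> e0; have [r [y ->] h] := inf_adherent e0 (conj (iset_ne n x) (iset_lb n x)).
by exists y.
Qed.

Let st := smax_family ht.

Lemma qn_add n x x' : qn n (x + x') <= qn n x + qn n x'.
Proof.
apply: ler_eps => e e0.
have e20 : 0 < e / 2 by rewrite divr_gt0.
have [y hy] := qn_approx n x e20; have [y' hy'] := qn_approx n x' e20.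
apply: le_trans (qn_le n (x + x') (y + y')) _.
have -> : x + x' - chk (y + y') = (x - chk y) + (x' - chk y').
  by rewrite (lin_add hchk) opprD addrACA.
apply: le_trans (sn_add st _ _ _) _.
have : e / 2 + e / 2 = e by rewrite -splitr.
move: hy hy'; move: (smax t n (x - chk y)) (smax t n (x' - chk y')) (qn n x) (qn n x') => a b c d.
lra.
Qed.

Lemma qn_scale_le n a x : qn n (a *: x) <= nc a * qn n x.
Proof.
have na0 := nc_ge0 a.
suff : qn n (a *: x) - nc a * qn n x <= 0 by rewrite subr_le0.
apply: (le0_eps na0) => e e0.
have [y hy] := qn_approx n x e0.
have := qn_le n (a *: x) (a *: y).
rewrite (lin_scale hchk) -scalerBr (sn_scale st) => h.
have : nc a * smax t n (x - chk y) <= nc a * (qn n x + e) by apply: ler_wpM2l => //; apply: ltW.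
move: h; move: (nc a * smax t n (x - chk y)) => b h1 h2.
have -> : nc a * e = nc a * (qn n x + e) - nc a * qn n x by ring.
lra.
Qed.

Lemma qn_family : is_seminorm_family qn.
Proof.
move=> n; split; first exact: qn_ge0.
split; first exact: qn_add.
move=> a x; apply/eqP; rewrite eq_le qn_scale_le /=.
have [->|a0] := eqVneq a 0.
  by rewrite nc0 mul0r qn_ge0.
have := qn_scale_le n a^-1 (a *: x); rewrite scalerA mulVf // scale1r ncV => h.
have na0 : 0 < nc a by rewrite lt_def nc_ge0 andbT; apply/negP => /eqP /nc_eq0 /eqP; rewrite (negPf a0).
have := ler_wpM2l (ltW na0) h; rewrite mulrA mulfV ?mul1r //; exact: lt0r_neq0.
Qed.
End InfSemi.

Lemma zA1 (T : zmodType) (a b s y : T) : a - (s + y) - (b - s) = a - b - y.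
Proof. by rewrite -!addrA; congr (_ + _); rewrite opprD opprB addrC addrACA subrr add0r. Qed.
Lemma zA3 (T : zmodType) (a b l : T) : a - l = (a - b) + (b - l).
Proof. by rewrite addrA subrK. Qed.

Definition gk (k : nat) : RR := (2^-1) ^+ k.
Lemma gk_gt0 k : 0 < gk k. Proof. by rewrite exprn_gt0 // invr_gt0. Qed.
Lemma gkS k : gk k.+1 = gk k / 2. Proof. by rewrite /gk exprSr. Qed.
Lemma gk_le k k' : (k <= k')%N -> gk k' <= gk k.
Proof. move=> kk; apply: ler_wiXn2l => //; rewrite ?invr_ge0 ?invf_le1 ?ler1n ?ltr0n //. Qed.
Lemma gk_small e : 0 < e -> exists K, gk K < e.
Proof.
move=> e0; have [k hk] := ltr_add_invr e0; exists k; rewrite add0r in hk.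
apply: le_lt_trans hk; rewrite /gk exprVn -natrX.
have p1 : (k.+1%:R : RR) \in Num.pos by rewrite posrE ltr0n.
have p2 : ((2 ^ k)%:R : RR) \in Num.pos by rewrite posrE ltr0n expn_gt0.
by rewrite (lef_pV2 p2 p1) ler_nat; apply: ltn_expl.
Qed.

Lemma merge_N (P : nat -> nat -> Prop) :
  (forall k, exists N, forall K, (N <= K)%N -> P k K) ->
  forall j, exists N, forall K, (N <= K)%N -> forall k, (k <= j)%N -> P k K.
Proof.
move=> h; elim=> [|j [N ih]].
  have [N hN] := h 0%N; exists N => K KN k; rewrite leqn0 => /eqP ->; exact: hN.
have [N' hN'] := h j.+1; exists (maxn N N') => K KN k.
rewrite leq_eqVlt => /orP[/eqP ->|]; first by apply: hN'; apply: leq_trans KN; rewrite leq_maxr.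
by rewrite ltnS; apply: ih; apply: leq_trans KN; rewrite leq_maxl.
Qed.

Lemma conv_smax (T : lmodType C) (t : nat -> T -> RR) (v : nat -> T) l :
  converges_to t v l -> forall j e, 0 < e -> exists N, forall K, (N <= K)%N -> smax t j (v K - l) < e.
Proof.
move=> hl j e e0; have e20 : 0 < e / 2 by rewrite divr_gt0.
have [N HN] := merge_N (P := fun k K => t k (v K - l) < e / 2) (fun k => hl k _ e20) j.
exists N => K KN; apply: le_lt_trans (_ : e / 2 < e); last by rewrite ltr_pdivrMr // ltr_pMr // ltr1n.
apply: smax_le; first exact: ltW.
by move=> k kj; apply: ltW; apply: HN.
Qed.

Section InfComplete.
Variables (T Q : lmodType C) (t : nat -> T -> RR) (ht : is_seminorm_family t) (chk : Q -> T)
  (hchk : is_linear chk).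
Hypothesis tc : forall u, cauchy_seq t u -> exists l, converges_to t u l.
Local Notation qn := (qn t chk).

Lemma qn_mono j K x : (j <= K)%N -> qn j x <= qn K x.
Proof.
move=> jK; apply: lb_le_inf; first exact: iset_ne.
move=> r [y ->]; apply: le_trans (qn_le t chk j x y) _; exact: smax_mono.
Qed.

Lemma qn_complete : forall u, cauchy_seq qn u -> exists l, converges_to qn u l.
Proof.
have qf := qn_family ht hchk.
move=> u hu.
have exN : forall k, exists N, pb (forall i j, (N <= i)%N -> (N <= j)%N -> qn k (u i - u j) < gk k).
  by move=> k; have [N HN] := hu k (gk k) (gk_gt0 k); exists N; apply/pbP.
pose Nk k := xchoose (exN k).
have HNk : forall k i j, (Nk k <= i)%N -> (Nk k <= j)%N -> qn k (u i - u j) < gk k.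
  by move=> k; apply/pbP; exact: (xchooseP (exN k)).
pose nn := fix nn k := if k is k'.+1 then maxn (nn k') (Nk k) else Nk 0%N.
have nnN : forall k, (Nk k <= nn k)%N by case => //= k; rewrite leq_maxr.
have nnS : forall k, (nn k <= nn k.+1)%N by move=> k /=; rewrite leq_maxl.
have Hnn : forall k i j, (nn k <= i)%N -> (nn k <= j)%N -> qn k (u i - u j) < gk k.
  by move=> k i j hi hj; apply: HNk; [apply: leq_trans (nnN k) hi | apply: leq_trans (nnN k) hj].
pose d k := u (nn k.+1) - u (nn k).
have exY : forall k, exists y, pb (smax t k (d k - chk y) < gk k).
  move=> k; have h := Hnn k (nn k.+1) (nn k) (nnS k) (leqnn _).
  have e0 : 0 < gk k - qn k (d k) by rewrite subr_gt0.
  have [y hy] := qn_approx t chk k (d k) e0; exists y; apply/pbP.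
  by move: hy; rewrite addrCA subrr addr0.
pose yk k := xchoose (exY k).
have Hy : forall k, smax t k (d k - chk (yk k)) < gk k.
  by move=> k; apply/pbP; exact: (xchooseP (exY k)).
pose S K := \sum_(k < K) yk k.
pose v K := u (nn K) - chk (S K).
have vS : forall K, v K.+1 - v K = d K - chk (yk K).
  by move=> K; rewrite /v /S big_ord_recr /= (lin_add hchk) zA1.
have tail : forall j K K', (j <= K)%N -> (K <= K')%N -> t j (v K' - v K) <= 2 * gk K - 2 * gk K'.
  move=> j K K' jK; elim: K' => [|K' ih].
    by rewrite leqn0 => /eqP ->; rewrite !subrr sn0.
  rewrite leq_eqVlt => /orP[/eqP <-|]; first by rewrite !subrr sn0.
  rewrite ltnS => KK'; have := ih KK'.
  have h1 : t j (v K'.+1 - v K') < gk K'.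
    apply: le_lt_trans (le_smax t _ (leq_trans jK KK')) _; rewrite vS; exact: Hy.
  have := sn_tri ht j (v K'.+1) (v K') (v K); rewrite gkS.
  move: h1; move: (t j _) (t j _) (t j _) (gk K') (gk K) => a b c g1 g2 *; lra.
have vC : cauchy_seq t v.
  move=> j e e0; have e40 : 0 < e / 4 by rewrite divr_gt0.
  have [K0 hK0] := gk_small e40.
  exists (maxn j K0) => i i' hi hi'.
  set K := maxn j K0.
  have jK : (j <= K)%N by rewrite leq_maxl.
  have gK : gk K <= gk K0 by apply: gk_le; rewrite leq_maxr.
  have := sn_tri ht j (v i) (v K) (v i'); rewrite (sn_subC ht j (v K)).
  have := tail j K i jK hi; have := tail j K i' jK hi'.
  have := gk_gt0 i; have := gk_gt0 i'.
  have : e / 4 * 4 = e by rewrite divfK // pnatr_eq0.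
  move: hK0 gK; move: (t j _) (t j _) (t j _) (gk K) (gk K0) (gk i) (gk i') (e / 4) => a b c g1 g2 g3 g4 f *.
  lra.
have [l hl] := tc vC.
exists l => j e e0.
have e20 : 0 < e / 2 by rewrite divr_gt0.
have [K1 hK1] := gk_small e20.
have [K2 hK2] := conv_smax hl j e20.
set K := maxn j (maxn K1 K2).
have jK : (j <= K)%N by rewrite leq_maxl.
have K1K : (K1 <= K)%N by rewrite (leq_trans (leq_maxl K1 K2)) // leq_maxr.
have K2K : (K2 <= K)%N by rewrite (leq_trans (leq_maxr K1 K2)) // leq_maxr.
exists (nn K) => i iK.
have h1 : qn j (u i - u (nn K)) < gk K.
  apply: le_lt_trans (qn_mono _ jK) _; exact: Hnn.
have h2 : qn j (u (nn K) - l) <= smax t j (v K - l).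
  apply: le_trans (qn_le t chk j _ (S K)) _; by rewrite /v addrAC.
have h3 := hK2 K K2K.
have h4 : gk K <= gk K1 by apply: gk_le.
have := sn_add qf j (u i - u (nn K)) (u (nn K) - l); rewrite -zA3.
have : e / 2 + e / 2 = e by rewrite -splitr.
move: h1 h2 h3 h4 hK1; move: (qn j _) (qn j _) (qn j _) (smax t j _) (gk K) (gk K1) (e / 2) => a b c s g1 g2 f *.
lra.
Qed.
End InfComplete.

Lemma le_eps_mul (a c s : RR) : 0 <= s -> (forall e, 0 < e -> a <= (c + e) * s) -> a <= c * s.
Proof.
move=> s0 h; suff : a - c * s <= 0 by rewrite subr_le0.
apply: (le0_eps s0) => e e0; have := h e e0; rewrite mulrDl [e * s]mulrC; lra.
Qed.

Section JC.
Variables (B : algType C) (pB : nat -> B -> RR)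
  (T : lmodType C) (t : nat -> T -> RR) (hT : is_frechet t) (tens : B -> B -> T)
  (hTens : is_proj_tensor pB pB t tens)
  (al : B -> T -> T) (all : forall b, is_linear (al b)) (alc : forall b, cont_lin t t (al b))
  (alb : forall k, exists m c, forall b x y, t k (al b (tens x y)) <= c * smax pB m b * smax pB m x * smax pB m y).

Let ht := frechet_sn hT.
Lemma exM k : exists m, pb (exists c, forall b x y, t k (al b (tens x y)) <= c * smax pB m b * smax pB m x * smax pB m y).
Proof. by have [m [c h]] := alb k; exists m; apply/pbP; exists c. Qed.
Definition Mk k := xchoose (exM k).
Lemma MkP k : exists c, forall b x y, t k (al b (tens x y)) <= c * smax pB (Mk k) b * smax pB (Mk k) x * smax pB (Mk k) y.
Proof. by apply/pbP; exact: (xchooseP (exM k)). Qed.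

Definition valid k x (c : RR) := 0 <= c /\ forall b, t k (al b x) <= c * smax pB (Mk k) b.
Definition bdd x := forall k, exists c, valid k x c.
Definition rho k x := inf [set c | valid k x c].

Lemma valid_up k x c c' : valid k x c -> c <= c' -> valid k x c'.
Proof.
move=> [c0 h] cc; split; first exact: le_trans cc.
by move=> b; apply: le_trans (h b) _; apply: ler_wpM2r => //; apply: smax_ge0.
Qed.
Lemma rho_ge0 k x : bdd x -> 0 <= rho k x.
Proof. by move=> hx; apply: lb_le_inf; [have [c hc] := hx k; exists c | move=> c [] ]. Qed.
Lemma rho_le k x c : valid k x c -> rho k x <= c.
Proof. by move=> hc; apply: (ge_inf (E := [set c | valid k x c])) => //; exists 0 => c' []. Qed.
Lemma has_inf_valid k x : bdd x -> has_inf [set c | valid k x c].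
Proof. by move=> hx; split; [have [c hc] := hx k; exists c | exists 0 => c' []]. Qed.
Lemma rho_valid k x : bdd x -> valid k x (rho k x).
Proof.
move=> hx; split; first exact: rho_ge0.
move=> b; apply: le_eps_mul; first exact: smax_ge0.
move=> e e0.
have [c [c0 hc] ce] := inf_adherent e0 (has_inf_valid k hx).
apply: le_trans (hc b) _; apply: ler_wpM2r; [exact: smax_ge0 | exact: ltW].
Qed.

Lemma valid0 k : valid k 0 0.
Proof. by split => // b; rewrite (lin0 (all b)) sn0 // mul0r. Qed.
Lemma validD k x y c c' : valid k x c -> valid k y c' -> valid k (x + y) (c + c').
Proof.
move=> [c0 h] [c'0 h']; split; first by rewrite addr_ge0.
move=> b; rewrite (lin_add (all b)) mulrDl; apply: le_trans (sn_add ht _ _ _) _.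
exact: lerD.
Qed.
Lemma validZ k a x c : valid k x c -> valid k (a *: x) (nc a * c).
Proof.
move=> [c0 h]; split; first by rewrite mulr_ge0 ?nc_ge0.
by move=> b; rewrite (lin_scale (all b)) (sn_scale ht) -mulrA; apply: ler_wpM2l; [exact: nc_ge0 | exact: h].
Qed.
Lemma bdd0 : bdd 0. Proof. by move=> k; exists 0; exact: valid0. Qed.
Lemma bddD x y : bdd x -> bdd y -> bdd (x + y).
Proof. by move=> hx hy k; have [c hc] := hx k; have [c' hc'] := hy k; exists (c + c'); exact: validD. Qed.
Lemma bddZ a x : bdd x -> bdd (a *: x).
Proof. by move=> hx k; have [c hc] := hx k; exists (nc a * c); exact: validZ. Qed.
Lemma bddN x : bdd x -> bdd (- x).
Proof. by move=> hx; rewrite -scaleN1r; exact: bddZ. Qed.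

Lemma rhoD k x y : bdd x -> bdd y -> rho k (x + y) <= rho k x + rho k y.
Proof. by move=> hx hy; apply: rho_le; apply: validD; apply: rho_valid. Qed.
Lemma rhoZ k a x : bdd x -> rho k (a *: x) = nc a * rho k x.
Proof.
move=> hx; apply/eqP; rewrite eq_le; apply/andP; split.
  by apply: rho_le; apply: validZ; apply: rho_valid.
have [->|a0] := eqVneq a 0; first by rewrite nc0 mul0r; apply: rho_ge0; apply: bddZ.
have na0 : 0 < nc a by rewrite lt_def nc_ge0 andbT; apply/negP => /eqP /nc_eq0 /eqP; rewrite (negPf a0).
have h := rho_le (validZ a^-1 (rho_valid k (bddZ a hx))).
rewrite scalerA mulVf // scale1r ncV in h.
have := ler_wpM2l (ltW na0) h; rewrite mulrA mulfV ?mul1r //; exact: lt0r_neq0.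
Qed.

Definition Yp := {x : T | pb (bdd x)}.
HB.instance Definition _ := Choice.on Yp.
Lemma bddP (u : Yp) : bdd (val u). Proof. by apply/pbP; exact: (valP u). Qed.
Definition mkY x (h : bdd x) : Yp := exist _ x (introT (pbP _) h).
Definition y0 := mkY bdd0.
Definition yadd (u v : Yp) := mkY (bddD (bddP u) (bddP v)).
Definition yopp (u : Yp) := mkY (bddN (bddP u)).
Definition yscale a (u : Yp) := mkY (bddZ a (bddP u)).
Lemma yaddA : associative yadd. Proof. by move=> u v w; apply: val_inj; rewrite /= addrA. Qed.
Lemma yaddC : commutative yadd. Proof. by move=> u v; apply: val_inj; rewrite /= addrC. Qed.
Lemma yadd0 : left_id y0 yadd. Proof. by move=> u; apply: val_inj; rewrite /= add0r. Qed.
Lemma yaddN : left_inverse y0 yopp yadd. Proof. by move=> u; apply: val_inj; rewrite /= addNr. Qed.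
HB.instance Definition _ := GRing.isZmodule.Build Yp yaddA yaddC yadd0 yaddN.
Lemma yscaleA a b u : yscale a (yscale b u) = yscale (a * b) u. Proof. by apply: val_inj; rewrite /= scalerA. Qed.
Lemma yscale1 : left_id 1 yscale. Proof. by move=> u; apply: val_inj; rewrite /= scale1r. Qed.
Lemma yscaleDr : right_distributive yscale +%R. Proof. by move=> a u v; apply: val_inj; rewrite /= scalerDr. Qed.
Lemma yscaleDl v : {morph yscale^~ v: a b / a + b}. Proof. by move=> a b; apply: val_inj; rewrite /= scalerDl. Qed.
HB.instance Definition _ := GRing.Zmodule_isLmodule.Build C Yp yscaleA yscale1 yscaleDr yscaleDl.

Lemma valYD (u v : Yp) : val (u + v) = val u + val v. Proof. by []. Qed.
Lemma valYZ a (u : Yp) : val (a *: u) = a *: val u. Proof. by []. Qed.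
Lemma valYB (u v : Yp) : val (u - v) = val u - val v. Proof. by []. Qed.

Definition sig_ k (u : Yp) := t k (val u) + rho k (val u).
Lemma sig_family : is_seminorm_family sig_.
Proof.
move=> k; split; first by move=> u; apply: addr_ge0; [exact: (sn_ge0 ht) | exact: rho_ge0 (bddP u)].
split.
  move=> u v; rewrite /sig_ valYD.
  have := sn_add ht k (val u) (val v); have := rhoD k (bddP u) (bddP v).
  move: (t k _) (t k _) (t k _) (rho k _) (rho k _) (rho k _) => *; lra.
by move=> a u; rewrite /sig_ valYZ (sn_scale ht) (rhoZ _ _ (bddP u)) mulrDr.
Qed.
Lemma t_le_sig k u : t k (val u) <= sig_ k u.
Proof. by rewrite /sig_ lerDl; exact: rho_ge0 (bddP u). Qed.
Lemma rho_le_sig k u : rho k (val u) <= sig_ k u.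
Proof. by rewrite /sig_ lerDr (sn_ge0 ht). Qed.

Lemma sig_sep : separating sig_.
Proof.
move=> u h; apply: val_inj; case: hT => _ sep _; apply: sep => k.
apply/eqP; rewrite eq_le (sn_ge0 ht) andbT -(h k); exact: t_le_sig.
Qed.

Lemma valid_max k x c : (forall b, t k (al b x) <= c * smax pB (Mk k) b) -> valid k x (Num.max c 0).
Proof.
move=> h; split; first by rewrite le_max lexx orbT.
move=> b; apply: le_trans (h b) _; apply: ler_wpM2r; [exact: smax_ge0 | by rewrite le_max lexx].
Qed.

Lemma sig_complete : forall u, cauchy_seq sig_ u -> exists l, converges_to sig_ u l.
Proof.
move=> u hu; case: (hT) => _ _ tc.
have [l hl] : exists l, converges_to t (fun i => val (u i)) l.
  apply: tc => k e e0; have [N HN] := hu k e e0; exists N => i j iN jN.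
  apply: le_lt_trans (HN i j iN jN); rewrite -valYB; exact: t_le_sig.
have K1 : forall k e, 0 < e -> exists N, forall i, (N <= i)%N -> valid k (val (u i) - l) e.
  move=> k e e0; have [N HN] := hu k e e0; exists N => i iN; split; first exact: ltW.
  move=> b; apply: ler_eps => eps eps0.
  have [m [c [c0 Hc]]] := c1_bnd (alc b) k.
  have c10 : 0 < c + 1 by rewrite ltr_wpDl.
  have [N' HN'] := conv_smax hl m (divr_gt0 eps0 c10).
  set j := maxn N N'.
  have e1 : t k (al b (val (u i) - val (u j))) <= e * smax pB (Mk k) b.
    apply: le_trans (proj2 (rho_valid k (bddP (u i - u j))) b) _.
    apply: ler_wpM2r; first exact: smax_ge0.
    apply: le_trans (rho_le_sig _ _) _; apply: ltW; apply: HN => //; by rewrite leq_maxl.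
  have e2 : t k (al b (val (u j) - l)) <= eps.
    apply: le_trans (le_smax t _ (leqnn k)) _; apply: le_trans (Hc _) _.
    have h := HN' j (leq_maxr _ _).
    have : c * smax t m (val (u j) - l) <= c * (eps / (c + 1)) by apply: ler_wpM2l => //; apply: ltW.
    move=> h2; apply: le_trans h2 _.
    have hk : eps / (c + 1) * (c + 1) = eps by rewrite divfK // gt_eqF.
    rewrite -[X in _ <= X]hk mulrC; apply: ler_wpM2l; [apply: ltW; exact: divr_gt0 | by rewrite lerDl].
  have -> : val (u i) - l = (val (u i) - val (u j)) + (val (u j) - l) by rewrite addrA subrK.
  rewrite (lin_add (all b)).
  apply: le_trans (sn_add ht _ _ _) _; exact: lerD.
have bl : bdd l.
  move=> k; have [N HN] := K1 k 1 ltr01.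
  have h := HN N (leqnn N).
  have -> : l = val (u N) - (val (u N) - l) by rewrite opprB addrC subrK.
  exists (rho k (val (u N)) + nc (-1) * 1); rewrite -scaleN1r.
  apply: validD; [exact: rho_valid (bddP _) | exact: validZ].
exists (mkY bl) => k e e0.
have e20 : 0 < e / 2 by rewrite divr_gt0.
have [N1 H1] := K1 k _ e20; have [N2 H2] := hl k _ e20.
exists (maxn N1 N2) => i iN.
rewrite /sig_ valYB /=.
have := rho_le (H1 i (leq_trans (leq_maxl _ _) iN)); have := H2 i (leq_trans (leq_maxr _ _) iN).
have : e / 2 + e / 2 = e by rewrite -splitr.
move: (t k _) (rho k _) (e / 2) => *; lra.
Qed.

Lemma sig_frechet : is_frechet sig_.
Proof. split; [exact: sig_family | exact: sig_sep | exact: sig_complete]. Qed.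

Lemma bdd_tens x y : bdd (tens x y).
Proof.
move=> k; have [c hc] := MkP k.
exists (Num.max (c * smax pB (Mk k) x * smax pB (Mk k) y) 0); apply: valid_max => b.
apply: le_trans (hc b x y) _.
have -> : c * smax pB (Mk k) b * smax pB (Mk k) x * smax pB (Mk k) y =
  c * smax pB (Mk k) x * smax pB (Mk k) y * smax pB (Mk k) b by ring.
exact: lexx.
Qed.

Lemma jc_main : jcont2 pB t t al.
Proof.
case: (hTens) => _ [tb1 tb2] tc U.
pose f := fun x y => mkY (bdd_tens x y).
have fb : is_bilinear f.
  split => [v|w]; split => [x y|a x]; apply: val_inj => /=.
  - exact: (lin_add (tb1 v)).
  - exact: (lin_scale (tb1 v)).
  - exact: (lin_add (tb2 w)).
  - exact: (lin_scale (tb2 w)).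
have fc : jcont2 pB pB sig_ f.
  move=> k; have [m1 [c1 [c10 H1]]] := c2_bnd tc k; have [c hc] := MkP k.
  set M := maxn m1 (Mk k).
  exists M, (c1 + Num.max c 0) => x y; rewrite /sig_ /= mulrDl mulrDl.
  apply: lerD.
    apply: le_trans (le_smax t _ (leqnn k)) _; apply: le_trans (H1 x y) _.
    apply: mono3 => //; try exact: smax_ge0; apply: smax_mono; exact: leq_maxl.
  apply: le_trans (rho_le (valid_max (c := c * smax pB (Mk k) x * smax pB (Mk k) y) _)) _.
    move=> b; apply: le_trans (hc b x y) _.
    have -> : c * smax pB (Mk k) b * smax pB (Mk k) x * smax pB (Mk k) y =
      c * smax pB (Mk k) x * smax pB (Mk k) y * smax pB (Mk k) b by ring.
    exact: lexx.
  have hcm : c <= Num.max c 0 by rewrite le_max lexx.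
  have hcm0 : 0 <= Num.max c 0 by rewrite le_max lexx orbT.
  have sx : smax pB (Mk k) x <= smax pB M x by apply: smax_mono; exact: leq_maxr.
  have sy : smax pB (Mk k) y <= smax pB M y by apply: smax_mono; exact: leq_maxr.
  rewrite ge_max; apply/andP; split.
    apply: mono3 => //; exact: smax_ge0.
  by rewrite !mulr_ge0 ?smax_ge0.
have fT := sig_frechet.
have [g [[gl gc gt] _]] := U Yp sig_ fT f fb fc.
have vg : forall x, val (g x) = x.
  apply: (tens_uniq hTens hT (g1 := fun x => val (g x)) (g2 := fun x => x)).
  - by split => [x y|a x]; rewrite ?(lin_add gl) ?(lin_scale gl).
  - apply: comp11 gc _ => k; exists k, 1 => u; rewrite mul1r.
    apply: le_trans (t_le_sig k u) _; exact: le_smax.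
  - exact: lin_id.
  - exact: c1_id.
  - by move=> v w; rewrite gt.
move=> k; have [m2 [c2 [c20 H2]]] := c1_bnd gc k.
set M := maxn (Mk k) m2.
exists M, c2 => b x.
rewrite -{1}(vg x).
apply: le_trans (proj2 (rho_valid k (bddP (g x))) b) _.
have h1 : rho k (val (g x)) <= c2 * smax t m2 x.
  apply: le_trans (rho_le_sig _ _) _; apply: le_trans (le_smax sig_ _ (leqnn k)) _; exact: H2.
have -> : c2 * smax pB M b * smax t M x = (c2 * smax t M x) * smax pB M b by ring.
apply: ler_pM => //; first exact: rho_ge0 (bddP _).
  exact: smax_ge0.
  apply: le_trans h1 _; apply: ler_wpM2l => //; apply: smax_mono; exact: leq_maxr.
apply: smax_mono; exact: leq_maxl.
Qed.
End JC.

Lemma c3_mul_left (B : algType C) (pB : nat -> B -> RR) (T : lmodType C) (t : nat -> T -> RR) (f : B -> B -> T) :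
  jcont2 pB pB t f -> jcont2 pB pB pB (fun x y : B => x * y) ->
  forall k, exists m c, forall b x y, t k (f (b * x) y) <= c * smax pB m b * smax pB m x * smax pB m y.
Proof.
move=> /c2_bnd hf /c2_bnd hm k.
have [m [c [c0 H]]] := hf k; have [m' [c' [c'0 H']]] := hm m.
set M := maxn m m'.
exists M, (c * c') => b x y.
apply: le_trans (le_smax t _ (leqnn k)) _; apply: le_trans (H _ _) _.
have e : c * c' * smax pB M b * smax pB M x * smax pB M y = c * (c' * smax pB M b * smax pB M x) * smax pB M y by ring.
rewrite e; apply: mono3 => //; try exact: smax_ge0.
- apply: le_trans (H' b x) _; apply: mono3 => //; try exact: smax_ge0; apply: smax_mono; exact: leq_maxr.
- by apply: smax_mono; exact: leq_maxl.
Qed.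

Lemma c3_mul_right (B : algType C) (pB : nat -> B -> RR) (T : lmodType C) (t : nat -> T -> RR) (f : B -> B -> T) :
  jcont2 pB pB t f -> jcont2 pB pB pB (fun x y : B => x * y) ->
  forall k, exists m c, forall b x y, t k (f x (y * b)) <= c * smax pB m b * smax pB m x * smax pB m y.
Proof.
move=> /c2_bnd hf /c2_bnd hm k.
have [m [c [c0 H]]] := hf k; have [m' [c' [c'0 H']]] := hm m.
set M := maxn m m'.
exists M, (c * c') => b x y.
apply: le_trans (le_smax t _ (leqnn k)) _; apply: le_trans (H _ _) _.
have e : c * c' * smax pB M b * smax pB M x * smax pB M y = c * smax pB M x * (c' * smax pB M y * smax pB M b) by ring.
rewrite e; apply: mono3 => //; try exact: smax_ge0.
- by apply: smax_mono; exact: leq_maxl.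
- apply: le_trans (H' y b) _; apply: mono3 => //; try exact: smax_ge0; apply: smax_mono; exact: leq_maxr.
Qed.

Lemma qn_map (T Q : lmodType C) (t : nat -> T -> RR) (ht : is_seminorm_family t) (chk : Q -> T)
  (hchk : is_linear chk) (F : T -> T) (Fl : is_linear F) (Fi : forall y, exists y', F (chk y) = chk y')
  n m (K : RR) : 0 <= K -> (forall w, smax t n (F w) <= K * smax t m w) ->
  forall z, qn t chk n (F z) <= K * qn t chk m z.
Proof.
move=> K0 HK z; suff : qn t chk n (F z) - K * qn t chk m z <= 0 by rewrite subr_le0.
apply: (le0_eps K0) => e e0.
have [y hy] := qn_approx t chk m z e0.
have [y' hy'] := Fi y.
have h1 := qn_le t chk n (F z) y'.
rewrite -hy' -(linB Fl) in h1.
have h2 := HK (z - chk y).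
have h3 : K * smax t m (z - chk y) <= K * (qn t chk m z + e) by apply: ler_wpM2l => //; apply: ltW.
move: h1 h2 h3; move: (qn t chk n _) (smax t n _) (smax t m _) (qn t chk m z) => a b c d.
rewrite mulrDr; lra.
Qed.

Section MainSec.
Variables (A B : algType C) (pA : nat -> A -> RR) (pB : nat -> B -> RR)
  (hA : frechet_alg pA) (hB : frechet_alg pB)
  (phi : A -> B) (hphi : is_alg_hom phi) (cphi : cont_lin pA pB phi)
  (TA : lmodType C) (tA : nat -> TA -> RR) (tensA : A -> A -> TA)
  (hTA : is_proj_tensor pA pA tA tensA)
  (muA : TA -> A) (hmuA : is_mult_map pA tA tensA muA)
  (laA : A -> TA -> TA) (raA : TA -> A -> TA) (hactA : tensor_actions tA tensA laA raA)
  (OA : lmodType C) (oA : nat -> OA -> RR) (jA : OA -> TA)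
  (hOA : is_omega1 tA muA oA jA)
  (TB : lmodType C) (tB : nat -> TB -> RR) (tensB : B -> B -> TB)
  (hTB : is_proj_tensor pB pB tB tensB)
  (muB : TB -> B) (hmuB : is_mult_map pB tB tensB muB)
  (laB : B -> TB -> TB) (raB : TB -> B -> TB) (hactB : tensor_actions tB tensB laB raB)
  (phiT : TA -> TB) (hphiT : is_tensor_map tA tB tensA tensB phi phiT)
  (Q : lmodType C) (q : nat -> Q -> RR) (qt : B -> OA -> B -> Q)
  (hQ : is_bal_tensor pB oA phi laA raA jA q qt)
  (chk : Q -> TB) (hchk : is_check_map q tB qt jA phiT laB raB chk).

Lemma fB : is_frechet pB. Proof. by case: hB. Qed.
Lemma fTB : is_frechet tB. Proof. by case: hTB. Qed.
Lemma snB : is_seminorm_family pB. Proof. exact: frechet_sn fB. Qed.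
Lemma snTB : is_seminorm_family tB. Proof. exact: frechet_sn fTB. Qed.
Lemma phi_lin : is_linear phi. Proof. by case: hphi. Qed.
Lemma phiM x y : phi (x * y) = phi x * phi y. Proof. by case: hphi. Qed.
Lemma phi1 : phi 1 = 1. Proof. by case: hphi. Qed.
Lemma laB_lin b : is_linear (laB b). Proof. by case: hactB => h _ _ _; case: (h b). Qed.
Lemma laB_cont b : cont_lin tB tB (laB b). Proof. by case: hactB => h _ _ _; case: (h b). Qed.
Lemma raB_lin b : is_linear (fun t => raB t b). Proof. by case: hactB => _ h _ _; case: (h b). Qed.
Lemma raB_cont b : cont_lin tB tB (fun t => raB t b). Proof. by case: hactB => _ h _ _; case: (h b). Qed.
Lemma laB_tens a x y : laB a (tensB x y) = tensB (a * x) y. Proof. by case: hactB. Qed.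
Lemma raB_tens a x y : raB (tensB x y) a = tensB x (y * a). Proof. by case: hactB. Qed.
Lemma muB_lin : is_linear muB. Proof. by case: hmuB. Qed.
Lemma muB_cont : cont_lin tB pB muB. Proof. by case: hmuB. Qed.
Lemma muB_tens x y : muB (tensB x y) = x * y. Proof. by case: hmuB. Qed.
Lemma phiT_lin : is_linear phiT. Proof. by case: hphiT. Qed.
Lemma phiT_cont : cont_lin tA tB phiT. Proof. by case: hphiT. Qed.
Lemma phiT_tens x y : phiT (tensA x y) = tensB (phi x) (phi y). Proof. by case: hphiT. Qed.
Lemma chk_lin : is_linear chk. Proof. by case: hchk. Qed.
Lemma chk_cont : cont_lin q tB chk. Proof. by case: hchk. Qed.
Lemma chk_qt b w c : chk (qt b w c) = laB b (raB (phiT (jA w)) c). Proof. by case: hchk. Qed.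
Lemma tensB_bil : is_bilinear tensB. Proof. by case: hTB. Qed.
Lemma tensB_cont : jcont2 pB pB tB tensB. Proof. by case: hTB. Qed.
Lemma muA_jA w : muA (jA w) = 0. Proof. by case: hOA. Qed.
Lemma muA_lin : is_linear muA. Proof. by case: hmuA. Qed.
Lemma muA_cont : cont_lin tA pA muA. Proof. by case: hmuA. Qed.
Lemma muA_tens x y : muA (tensA x y) = x * y. Proof. by case: hmuA. Qed.

Lemma muB_phiT t : muB (phiT t) = phi (muA t).
Proof.
apply: (tens_uniq hTA fB (g1 := fun t => muB (phiT t)) (g2 := fun t => phi (muA t))).
- exact: lin_comp phiT_lin muB_lin.
- exact: comp11 phiT_cont muB_cont.
- exact: lin_comp muA_lin phi_lin.
- exact: comp11 muA_cont cphi.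
- by move=> v w; rewrite phiT_tens muB_tens muA_tens phiM.
Qed.

Lemma muB_phiT_jA w : muB (phiT (jA w)) = 0.
Proof. by rewrite muB_phiT muA_jA (lin0 phi_lin). Qed.

Lemma iii_to_ii : dense_in_omega1 tB muB chk -> der_restr_inj pB phi.
Proof.
move=> dens X pX l r bm D1 D2 hD1 hD2 e b.
case: bm => fX [[lb1 lb2] lc] [[rb1 rb2] rc] [lA rA lrA] [l1 r1].
have snX := frechet_sn fX.
case: hD1 => D1l D1c D1L; case: hD2 => D2l D2c D2L.
pose D := fun b => D1 b - D2 b.
have Dl : is_linear D.
  split => [x y|a x]; rewrite /D.
    by rewrite (lin_add D1l) (lin_add D2l) opprD addrACA.
  by rewrite (lin_scale D1l) (lin_scale D2l) scalerBr.
have Dc : cont_lin pB pX D by rewrite /D; exact: (c1_sub snX D1c D2c).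
have DL : forall a b, D (a * b) = l a (D b) + r (D a) b.
  move=> a b'; rewrite /D D1L D2L /=.
  rewrite (linB (lb2 a)) (linB (rb1 b')).
  by rewrite opprD addrACA.
have D0 : forall a, D (phi a) = 0 by move=> a; rewrite /D e subrr.
have D1z : D 1 = 0.
  have := DL 1 1; rewrite mulr1 l1 r1 => h; apply: (addrI (D 1)); by rewrite addr0 -h.
have Tbil : is_bilinear (fun x y => l x (D y)).
  split => [v|u]; first exact: lb1.
  exact: lin_comp Dl (lb2 u).
have Tcont : jcont2 pB pB pX (fun x y => l x (D y)).
  exact: (comp12 lc (c1_id pB) Dc).
case: hTB => _ _ _ UB.
have [T [[Tl Tc Tt] _]] := UB X pX fX _ Tbil Tcont.
have lcont : forall b, cont_lin pX pX (l b) by move=> b'; exact: (c2_right b' lc).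
have rcont : forall b, cont_lin pX pX (fun x => r x b) by move=> b'; exact: (c2_left b' rc).
have T1 : forall b t, T (laB b t) = l b (T t).
  move=> b'; apply: (tens_uniq hTB fX (g1 := fun t => T (laB b' t)) (g2 := fun t => l b' (T t))).
  - exact: lin_comp (laB_lin b') Tl.
  - exact: comp11 (laB_cont b') Tc.
  - exact: lin_comp Tl (lb2 b').
  - exact: comp11 Tc (lcont b').
  - by move=> v w; rewrite laB_tens !Tt lA.
have T2 : forall c t, T (raB t c) = r (T t) c + l (muB t) (D c).
  move=> c; apply: (tens_uniq hTB fX (g1 := fun t => T (raB t c)) (g2 := fun t => r (T t) c + l (muB t) (D c))).
  - exact: lin_comp (raB_lin c) Tl.
  - exact: comp11 (raB_cont c) Tc.
  - split => [x y|a x].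
      by rewrite (lin_add Tl) (lin_add (rb1 c)) (lin_add muB_lin) (lin_add (lb1 (D c))) addrACA.
    by rewrite (lin_scale Tl) (lin_scale (rb1 c)) (lin_scale muB_lin) (lin_scale (lb1 (D c))) scalerDr.
  - apply: (c1_add snX); first exact: comp11 Tc (rcont c).
    exact: comp11 muB_cont (c2_left (D c) lc).
  - move=> v w; rewrite raB_tens !Tt muB_tens DL (lin_add (lb2 v)) lA lrA addrC //.
have T3 : forall t, T (phiT t) = 0.
  apply: (tens_uniq hTA fX (g1 := fun t => T (phiT t)) (g2 := fun _ => 0)).
  - exact: lin_comp phiT_lin Tl.
  - exact: comp11 phiT_cont Tc.
  - by split => [x y|a x]; rewrite ?addr0 ?scaler0.
  - exact: c1_zero.
  - by move=> v w; rewrite phiT_tens Tt D0 (lin0 (lb2 _)).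
have T5 : forall y, T (chk y) = 0.
  apply: (bal_uniq hQ fX (g1 := fun y => T (chk y)) (g2 := fun _ => 0)).
  - exact: lin_comp chk_lin Tl.
  - exact: comp11 chk_cont Tc.
  - by split => [x y|a x]; rewrite ?addr0 ?scaler0.
  - exact: c1_zero.
  - move=> b' w c; rewrite chk_qt T1 T2 T3 muB_phiT_jA.
    by rewrite (lin0 (rb1 c)) (lin0 (lb1 (D c))) addr0 (lin0 (lb2 b')).
pose x := tensB 1 b - tensB b 1.
have Tx : T x = D b.
  rewrite /x (linB Tl) !Tt l1 D1z (lin0 (lb2 b)) subr0 //.
have mx : muB x = 0 by rewrite /x (linB muB_lin) !muB_tens mul1r mulr1 subrr.
clearbody x.
have Tx0 : T x = 0.
  case: fX => _ sepX _; apply: sepX => n.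
  have [m [c [c0 H]]] := c1_bnd Tc n.
  apply/eqP; rewrite eq_le (sn_ge0 snX) andbT.
  apply: (le0_eps c0) => eps eps0.
  have [y hy] := dens x mx m eps eps0.
  have : T x = T (x - chk y) by rewrite (linB Tl) T5 subr0.
  move=> ->; apply: le_trans (le_smax pX (T (x - chk y)) (leqnn n)) _.
  apply: le_trans (H _) _; apply: ler_wpM2l => //; exact: ltW.
have : D b = 0 by rewrite -Tx Tx0.
by rewrite /D => /eqP; rewrite subr_eq0 => /eqP.
Qed.

Lemma mB : jcont2 pB pB pB (fun x y : B => x * y). Proof. by case: hB. Qed.
Lemma tensB1 v : is_linear (fun u => tensB u v). Proof. by case: tensB_bil. Qed.
Lemma tensB2 u : is_linear (tensB u). Proof. by case: tensB_bil. Qed.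

Ltac tuniq g1' g2' := apply: (tens_uniq hTB fTB (g1 := g1') (g2 := g2')).

Lemma laB1 x : laB 1 x = x.
Proof.
move: x; tuniq (laB 1) (fun x : TB => x).
- exact: laB_lin. - exact: laB_cont. - exact: lin_id. - exact: c1_id.
- by move=> v w; rewrite laB_tens mul1r.
Qed.
Lemma raB1 x : raB x 1 = x.
Proof.
move: x; tuniq (fun x => raB x 1) (fun x : TB => x).
- exact: raB_lin. - exact: raB_cont. - exact: lin_id. - exact: c1_id.
- by move=> v w; rewrite raB_tens mulr1.
Qed.
Lemma laBA a b x : laB (a * b) x = laB a (laB b x).
Proof.
move: x; tuniq (laB (a * b)) (fun x => laB a (laB b x)).
- exact: laB_lin. - exact: laB_cont. - exact: lin_comp (laB_lin b) (laB_lin a).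
- exact: comp11 (laB_cont b) (laB_cont a).
- by move=> v w; rewrite !laB_tens mulrA.
Qed.
Lemma raBA a b x : raB x (a * b) = raB (raB x a) b.
Proof.
move: x; tuniq (fun x => raB x (a * b)) (fun x => raB (raB x a) b).
- exact: raB_lin. - exact: raB_cont. - exact: lin_comp (raB_lin a) (raB_lin b).
- exact: comp11 (raB_cont a) (raB_cont b).
- by move=> v w; rewrite !raB_tens mulrA.
Qed.
Lemma laraB a b x : raB (laB a x) b = laB a (raB x b).
Proof.
move: x; tuniq (fun x => raB (laB a x) b) (fun x => laB a (raB x b)).
- exact: lin_comp (laB_lin a) (raB_lin b). - exact: comp11 (laB_cont a) (raB_cont b).
- exact: lin_comp (raB_lin b) (laB_lin a). - exact: comp11 (raB_cont b) (laB_cont a).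
- by move=> v w; rewrite laB_tens !raB_tens laB_tens.
Qed.
Lemma laB_lin1 x : is_linear (fun a => laB a x).
Proof.
split => [a a'|c a]; move: x.
  tuniq (fun x => laB (a + a') x) (fun x => laB a x + laB a' x).
  - exact: laB_lin. - exact: laB_cont.
  - split => [x y|c x].
      by rewrite (lin_add (laB_lin a)) (lin_add (laB_lin a')) addrACA.
    by rewrite (lin_scale (laB_lin a)) (lin_scale (laB_lin a')) scalerDr.
  - by apply: (c1_add snTB); apply: laB_cont.
  - by move=> v w; rewrite !laB_tens mulrDl (lin_add (tensB1 w)).
tuniq (fun x => laB (c *: a) x) (fun x => c *: laB a x).
- exact: laB_lin. - exact: laB_cont.
- split => [x y|d x].
    by rewrite (lin_add (laB_lin a)) scalerDr.
  by rewrite (lin_scale (laB_lin a)) !scalerA mulrC.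
- by move=> n; have [m [k H]] := laB_cont a n; exists m, (nc c * k) => x; rewrite (sn_scale snTB) -mulrA ler_wpM2l ?nc_ge0.
- by move=> v w; rewrite !laB_tens -scalerAl (lin_scale (tensB1 w)).
Qed.
Lemma raB_lin1 x : is_linear (raB x).
Proof.
split => [a a'|c a]; move: x.
  tuniq (fun x => raB x (a + a')) (fun x => raB x a + raB x a').
  - exact: raB_lin. - exact: raB_cont.
  - split => [x y|c x].
      by rewrite (lin_add (raB_lin a)) (lin_add (raB_lin a')) addrACA.
    by rewrite (lin_scale (raB_lin a)) (lin_scale (raB_lin a')) scalerDr.
  - by apply: (c1_add snTB); apply: raB_cont.
  - by move=> v w; rewrite !raB_tens mulrDr (lin_add (tensB2 v)).
tuniq (fun x => raB x (c *: a)) (fun x => c *: raB x a).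
- exact: raB_lin. - exact: raB_cont.
- split => [x y|d x].
    by rewrite (lin_add (raB_lin a)) scalerDr.
  by rewrite (lin_scale (raB_lin a)) !scalerA mulrC.
- by move=> n; have [m [k H]] := raB_cont a n; exists m, (nc c * k) => x; rewrite (sn_scale snTB) -mulrA ler_wpM2l ?nc_ge0.
- by move=> v w; rewrite !raB_tens -scalerAr (lin_scale (tensB2 v)).
Qed.

Lemma laB_jc : jcont2 pB tB tB laB.
Proof.
apply: (@jc_main B pB TB tB fTB tensB hTB laB laB_lin laB_cont).
move=> k; have [m [c H]] := c3_mul_left tensB_cont mB k.
by exists m, c => b x y; rewrite laB_tens; exact: H.
Qed.
Lemma raB_jc : jcont2 pB tB tB (fun b t => raB t b).
Proof.
apply: (@jc_main B pB TB tB fTB tensB hTB (fun b t => raB t b) raB_lin raB_cont).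
move=> k; have [m [c H]] := c3_mul_right tensB_cont mB k.
by exists m, c => b x y; rewrite raB_tens; exact: H.
Qed.

Lemma chk_laB b y : exists y', laB b (chk y) = chk y'.
Proof.
case: (hQ) => fQ [h1 h2 h3] qtc [bal1 bal2] UQ.
have ft : is_trilinear (fun b' w c => qt (b * b') w c).
  split => [w c|u c|u w]; [|exact: h2|exact: h3].
  apply: lin_comp (h1 w c); split => [x1 x2|a x1]; [exact: mulrDr | by rewrite scalerAr].
have fc : jcont3 pB oA pB q (fun b' w c => qt (b * b') w c).
  exact: (comp13 qtc (c2_right b mB) (c1_id oA) (c1_id pB)).
have fbal : balanced phi laA raA jA (fun b' w c => qt (b * b') w c).
  split => a b' w w' c hw; first by rewrite mulrA (bal1 a (b * b') w w' c hw).
  exact: (bal2 a (b * b') w w' c hw).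
have [g [[gl gc gt] _]] := UQ Q q fQ _ ft fc fbal.
exists (g y); move: y.
apply: (bal_uniq hQ fTB (g1 := fun y => laB b (chk y)) (g2 := fun y => chk (g y))).
- exact: lin_comp chk_lin (laB_lin b).
- exact: comp11 chk_cont (laB_cont b).
- exact: lin_comp gl chk_lin.
- exact: comp11 gc chk_cont.
- by move=> b' w c; rewrite gt !chk_qt laBA.
Qed.

Lemma chk_raB c y : exists y', raB (chk y) c = chk y'.
Proof.
case: (hQ) => fQ [h1 h2 h3] qtc [bal1 bal2] UQ.
have ft : is_trilinear (fun b' w c' => qt b' w (c' * c)).
  split => [w c'|u c'|u w]; [exact: h1|exact: h2|].
  apply: lin_comp (h3 u w); split => [x1 x2|a x1]; [exact: mulrDl | by rewrite scalerAl].
have fc : jcont3 pB oA pB q (fun b' w c' => qt b' w (c' * c)).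
  exact: (comp13 qtc (c1_id pB) (c1_id oA) (c2_left c mB)).
have fbal : balanced phi laA raA jA (fun b' w c' => qt b' w (c' * c)).
  split => a b' w w' c' hw; first exact: (bal1 a b' w w' (c' * c) hw).
  by rewrite (bal2 a b' w w' (c' * c) hw) mulrA.
have [g [[gl gc gt] _]] := UQ Q q fQ _ ft fc fbal.
exists (g y); move: y.
apply: (bal_uniq hQ fTB (g1 := fun y => raB (chk y) c) (g2 := fun y => chk (g y))).
- exact: lin_comp chk_lin (raB_lin c).
- exact: comp11 chk_cont (raB_cont c).
- exact: lin_comp gl chk_lin.
- exact: comp11 gc chk_cont.
- by move=> b' w c'; rewrite gt !chk_qt laraB raBA.
Qed.

Definition hsq := qn_family snTB chk_lin.
Local Notation qB := (qn tB chk).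

Lemma qn_laB n : exists m c, 0 <= c /\ forall b z, qB n (laB b z) <= c * smax pB m b * qB m z.
Proof.
have [m [c [c0 H]]] := c2_bnd laB_jc n.
exists m, c; split => // b z.
apply: (qn_map (K := c * smax pB m b) snTB chk_lin (laB_lin b) (chk_laB b)).
  by rewrite mulr_ge0 ?smax_ge0.
exact: H.
Qed.
Lemma qn_raB n : exists m c, 0 <= c /\ forall b z, qB n (raB z b) <= c * smax pB m b * qB m z.
Proof.
have [m [c [c0 H]]] := c2_bnd raB_jc n.
exists m, c; split => // b z.
apply: (qn_map (K := c * smax pB m b) snTB chk_lin (raB_lin b) (chk_raB b) (F := fun z => raB z b)).
  by rewrite mulr_ge0 ?smax_ge0.
exact: H.
Qed.

Local Notation X := (@qT TB qB hsq).
Local Notation pi := (@qpi TB qB hsq).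
Local Notation qsX := (@qs TB qB hsq).

Lemma tcTB : forall u, cauchy_seq tB u -> exists l, converges_to tB u l. Proof. by case: fTB. Qed.
Lemma fX : is_frechet qsX. Proof. exact: qs_frechet (qn_complete snTB chk_lin tcTB). Qed.
Lemma snX : is_seminorm_family qsX. Proof. exact: qs_family. Qed.

Lemma smaxT0 n : smax tB n 0 = 0.
Proof. by apply/eqP; rewrite eq_le smax_ge0 andbT; apply: smax_le => // k _; rewrite (sn0 snTB). Qed.

Lemma NK_laB b z : NK qB z -> NK qB (laB b z).
Proof.
move=> hz n; have [m [c [c0 H]]] := qn_laB n.
apply/eqP; rewrite eq_le qn_ge0 andbT; have := H b z; by rewrite hz mulr0.
Qed.
Lemma NK_raB b z : NK qB z -> NK qB (raB z b).
Proof.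
move=> hz n; have [m [c [c0 H]]] := qn_raB n.
apply/eqP; rewrite eq_le qn_ge0 andbT; have := H b z; by rewrite hz mulr0.
Qed.

Definition lX b (u : X) : X := pi (laB b (val u)).
Definition rX (u : X) b : X := pi (raB (val u) b).
Lemma l_pi b x : lX b (pi x) = pi (laB b x).
Proof. by apply: qpiE; rewrite -(linB (laB_lin b)); apply: NK_laB; exact: NK_val. Qed.
Lemma r_pi b x : rX (pi x) b = pi (raB x b).
Proof. by apply: qpiE; rewrite -(linB (raB_lin b)); apply: NK_raB; exact: NK_val. Qed.

Lemma qn_le0 n x : qB n x <= smax tB n x.
Proof. by have := qn_le tB chk n x 0; rewrite (lin0 chk_lin) subr0. Qed.
Lemma pi_cont : cont_lin tB qsX pi.
Proof. by move=> n; exists n, 1 => x; rewrite qs_qpi mul1r; exact: qn_le0. Qed.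

Lemma bmX : frechet_bimod pB qsX lX rX.
Proof.
split.
- exact: fX.
- split; first split.
  + move=> v; split => [a a'|c a]; rewrite /lX.
      by rewrite (lin_add (laB_lin1 _)) qpiD.
    by rewrite (lin_scale (laB_lin1 _)) qpiZ.
  + move=> b; split => [u v|c u]; rewrite -(qpi_val u) ?(-(qpi_val v)).
      by rewrite -qpiD !l_pi (lin_add (laB_lin b)) qpiD.
    by rewrite -qpiZ !l_pi (lin_scale (laB_lin b)) qpiZ.
  + move=> n; have [m [c [c0 H]]] := qn_laB n; exists m, c => b u.
    rewrite /lX qs_qpi; apply: le_trans (H b (val u)) _.
    apply: ler_wpM2l; first by rewrite mulr_ge0 ?smax_ge0.
    exact: (le_smax qsX u (leqnn m)).
- split; first split.
  + move=> b; split => [u v|c u]; rewrite -(qpi_val u) ?(-(qpi_val v)).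
      by rewrite -qpiD !r_pi (lin_add (raB_lin b)) qpiD.
    by rewrite -qpiZ !r_pi (lin_scale (raB_lin b)) qpiZ.
  + move=> u; split => [a a'|c a]; rewrite /rX.
      by rewrite (lin_add (raB_lin1 _)) qpiD.
    by rewrite (lin_scale (raB_lin1 _)) qpiZ.
  + move=> n; have [m [c [c0 H]]] := qn_raB n; exists m, c => u b.
    rewrite /rX qs_qpi; apply: le_trans (H b (val u)) _.
    have -> : c * smax qsX m u * smax pB m b = c * smax pB m b * smax qsX m u by ring.
    apply: ler_wpM2l; first by rewrite mulr_ge0 ?smax_ge0.
    exact: (le_smax qsX u (leqnn m)).
- split => a b u; rewrite -(qpi_val u).
  + by rewrite !l_pi laBA.
  + by rewrite !r_pi raBA.
  + by rewrite l_pi !r_pi l_pi laraB.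
- by split => u; rewrite -(qpi_val u) ?l_pi ?r_pi ?laB1 ?raB1.
Qed.

Definition dB (b : B) : TB := tensB 1 b - tensB b 1.
Lemma dB_lin : is_linear dB.
Proof.
split => [x y|a x]; rewrite /dB.
  by rewrite (lin_add (tensB2 1)) (lin_add (tensB1 1)) opprD addrACA.
by rewrite (lin_scale (tensB2 1)) (lin_scale (tensB1 1)) scalerBr.
Qed.
Lemma dB_cont : cont_lin pB tB dB.
Proof. by apply: (c1_sub snTB); [exact: (c2_right 1 tensB_cont) | exact: (c2_left 1 tensB_cont)]. Qed.
Lemma dB_leib a b : dB (a * b) = laB a (dB b) + raB (dB a) b.
Proof.
rewrite /dB (linB (laB_lin a)) (linB (raB_lin b)) !laB_tens !raB_tens mulr1 mul1r.
by rewrite [RHS]addrC addrA subrK.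
Qed.

Lemma pi_chk y : pi (chk y) = 0.
Proof.
rewrite -(qpi0 hsq); apply: qpiE; rewrite subr0 => n.
apply/eqP; rewrite eq_le qn_ge0 andbT.
by have := qn_le tB chk n (chk y) y; rewrite subrr smaxT0.
Qed.

Lemma ii_to_iii : der_restr_inj pB phi -> dense_in_omega1 tB muB chk.
Proof.
move=> hii.
pose D1 := fun b => pi (dB b).
have hD1 : is_der pB qsX id lX rX D1.
  split.
  - exact: lin_comp dB_lin (qpi_lin hsq).
  - exact: comp11 dB_cont pi_cont.
  - by move=> a b; rewrite /D1 /= l_pi r_pi -qpiD dB_leib.
have hD2 : is_der pB qsX id lX rX (fun _ => 0).
  split.
  - by split => [x y|a x]; rewrite ?addr0 ?scaler0.
  - exact: c1_zero snX.
  - by move=> a b; rewrite -(qpi0 hsq) l_pi r_pi (lin0 (laB_lin a)) (lin0 (raB_lin b)) qpi0 addr0.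
have agree : forall a, D1 (phi a) = 0.
  move=> a; case: hOA => _ _ _ surj _.
  have [w hw] : exists w, jA w = tensA 1 a - tensA a 1.
    by apply: surj; rewrite (linB muA_lin) !muA_tens mul1r mulr1 subrr.
  rewrite /D1 -(pi_chk (qt 1 w 1)) chk_qt laB1 raB1 hw (linB phiT_lin) !phiT_tens phi1 //.
have D10 : forall b, D1 b = 0 by move=> b; exact: (hii X qsX lX rX bmX D1 (fun _ => 0) hD1 hD2 agree b).
pose Psi := fun t => pi (t - tensB (muB t) 1).
have Psi0 : forall t, Psi t = 0.
  apply: (tens_uniq hTB fX (g1 := Psi) (g2 := fun _ => 0)).
  - apply: lin_comp (qpi_lin hsq); split => [x y|a x].
      by rewrite (lin_add muB_lin) (lin_add (tensB1 1)) opprD addrACA.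
    by rewrite (lin_scale muB_lin) (lin_scale (tensB1 1)) scalerBr.
  - apply: comp11 pi_cont; apply: (c1_sub snTB); first exact: c1_id.
    exact: comp11 muB_cont (c2_left 1 tensB_cont).
  - by split => [x y|a x]; rewrite ?addr0 ?scaler0.
  - exact: c1_zero snX.
  - move=> v w; rewrite /Psi muB_tens.
    have -> : tensB v w - tensB (v * w) 1 = laB v (dB w).
      by rewrite /dB (linB (laB_lin v)) !laB_tens mulr1.
    by rewrite -l_pi; have := D10 w; rewrite /D1 => ->; rewrite -(qpi0 hsq) l_pi (lin0 (laB_lin v)).
move=> x mx m e e0.
have h := Psi0 x; rewrite /Psi mx (lin0 (tensB1 1)) subr0 in h.
have nk := qpi_eq0 h.
have [y hy] := qn_approx tB chk m x e0.
by exists y; rewrite nk add0r in hy.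
Qed.

Lemma main_sec : (frechet_epi pB phi <-> der_restr_inj pB phi) /\
  (der_restr_inj pB phi <-> dense_in_omega1 tB muB chk).
Proof.
split; split.
- exact: i_to_ii hB.
- exact: ii_to_i.
- exact: ii_to_iii.
- exact: iii_to_ii.
Qed.
End MainSec.

Unset Implicit Arguments.
Theorem theorem3p17
  (A B : algType C) (pA : nat -> A -> RR) (pB : nat -> B -> RR)
  (hA : frechet_alg pA) (hB : frechet_alg pB)
  (phi : A -> B) (hphi : is_alg_hom phi) (cphi : cont_lin pA pB phi)
  (* A ^(x) A, mu_A, its bimodule structure, Omega^1 A with j_A *)
  (TA : lmodType C) (tA : nat -> TA -> RR) (tensA : A -> A -> TA)
  (hTA : is_proj_tensor pA pA tA tensA)
  (muA : TA -> A) (hmuA : is_mult_map pA tA tensA muA)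
  (laA : A -> TA -> TA) (raA : TA -> A -> TA) (hactA : tensor_actions tA tensA laA raA)
  (OA : lmodType C) (oA : nat -> OA -> RR) (jA : OA -> TA)
  (hOA : is_omega1 tA muA oA jA)
  (* B ^(x) B, mu_B, its bimodule structure *)
  (TB : lmodType C) (tB : nat -> TB -> RR) (tensB : B -> B -> TB)
  (hTB : is_proj_tensor pB pB tB tensB)
  (muB : TB -> B) (hmuB : is_mult_map pB tB tensB muB)
  (laB : B -> TB -> TB) (raB : TB -> B -> TB) (hactB : tensor_actions tB tensB laB raB)
  (* phi ^(x) phi *)
  (phiT : TA -> TB) (hphiT : is_tensor_map tA tB tensA tensB phi phiT)
  (* B ^(x)_A Omega^1 A ^(x)_A B and phi-check (composed with j_B) *)
  (Q : lmodType C) (q : nat -> Q -> RR) (qt : B -> OA -> B -> Q)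
  (hQ : is_bal_tensor pB oA phi laA raA jA q qt)
  (chk : Q -> TB) (hchk : is_check_map q tB qt jA phiT laB raB chk) :
  (frechet_epi pB phi <-> der_restr_inj pB phi) /\
  (der_restr_inj pB phi <-> dense_in_omega1 tB muB chk).
Proof. intros; eapply main_sec; eassumption. Qed.
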